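(* Let $(C,\chi)$ be a Hopf heap and let $\mathrm{Tn}^r C\subseteq\mathrm{End}_{\mathbb{F}}(C)$ be the linear span of all right translations $\tau_a^b$, $a,b\in C$. (1) $\mathrm{Tn}^r C$ is a bialgebra with multiplication the opposite composition, i.e. $\tau_a^b\tau_c^d=\tau_c^d\circ\tau_a^b=\tau_a^{[b,c,d]}$, identity $\mathrm{id}_C$, and (well-defined) coproduct and counit $\Delta(\tau_a^b)=\sum\tau_{a_{(2)}}^{b_{(1)}}\otimes\tau_{a_{(1)}}^{b_{(2)}}$, $\varepsilon(\tau_a^b)=\varepsilon(a)\varepsilon(b)$. (2) If $(C,\chi)$ admits a Grunspan map $\vartheta$, then $\mathrm{Tn}^r C$ is a Hopf algebra with antipode $S(\tau_a^b)=\tau_b^{\vartheta(a)}$. (3) If $f:C\to D$ is a morphism of Hopf heaps, then $\mathrm{Tn}^r f:\mathrm{Tn}^r C\to\mathrm{Tn}^r D$, $\tau_a^b\mapsto\tau_{f(a)}^{f(b)}$, is a (well-defined) bialgebra map, and a Hopf algebra map when both have Grunspan maps. (4) $C\mapsto\mathrm{Tn}^r C$, $f\mapsto\mathrm{Tn}^r f$ is a functor from Hopf heaps to bialgebras (from Hopf heaps with Grunspan maps to Hopf algebras).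
   Context: Work over a field $\mathbb{F}$; coalgebras are coassociative, counital, nonzero, with Sweedler notation; $C^{\mathrm{co}}$ is the co-opposite coalgebra. A Hopf heap is a coalgebra $C$ with a coalgebra map $\chi:C\otimes C^{\mathrm{co}}\otimes C\to C$, $a\otimes b\otimes c\mapsto[a,b,c]$, such that $[[a,b,c],d,e]=[a,b,[c,d,e]]$ and $\sum[c_{(1)},c_{(2)},a]=\sum[a,c_{(1)},c_{(2)}]=\varepsilon(c)a$. A morphism of Hopf heaps is a coalgebra map $f$ with $f([a,b,c])=[f(a),f(b),f(c)]$. The right $(a,b)$-translation is $\tau_a^b:C\to C$, $c\mapsto[c,a,b]$. A Grunspan map is a coalgebra map $\vartheta:C\to C$ with $[[a,b,\vartheta(c)],d,e]=[a,[d,c,b],e]$ for all $a,b,c,d,e$. *)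

(* Defs.v *)
(* There is no tensor-product library, so an element of V (x) W is represented
   by a finite list of pairs [(v_i, w_i)] (meaning sum_i v_i (x) w_i), and two
   such representatives are identified iff every pair of linear functionals
   phi : V -> F, psi : W -> F gives the same value sum_i phi v_i * psi w_i.
   Over a field this is exactly equality in V (x) W. *)
From HB Require Import structures.
From mathcomp Require Import all_boot all_order all_algebra.
Set Implicit Arguments. Unset Strict Implicit. Unset Printing Implicit Defensive.
Import GRing.Theory.
Local Open Scope ring_scope.

Fixpoint allP (T : Type) (P : T -> Prop) (s : seq T) : Prop :=
  if s is x :: s' then P x /\ allP P s' else True.

Section HopfHeaps.
Variable F : fieldType.

Definition lfun (V : lmodType F) (phi : V -> F) : Prop :=
  forall (a : F) (x y : V), phi (a *: x + y) = a * phi x + phi y.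

Definition lmap (V W : lmodType F) (f : V -> W) : Prop :=
  forall (a : F) (x y : V), f (a *: x + y) = a *: f x + f y.

Definition teq2 (V W : lmodType F) (s t : seq (V * W)) : Prop :=
  forall (phi : V -> F) (psi : W -> F), lfun phi -> lfun psi ->
    \sum_(p <- s) phi p.1 * psi p.2 = \sum_(p <- t) phi p.1 * psi p.2.

(* (C, d, e) is a (nonzero, coassociative, counital) coalgebra;
   d c represents Delta(c) = sum c_(1) (x) c_(2). *)
Definition coalgebra (C : lmodType F) (d : C -> seq (C * C)) (e : C -> F) : Prop :=
  [/\ (exists c : C, c != 0),
      lfun e,
      (forall (a : F) (x y : C),
         teq2 (d (a *: x + y)) ([seq (a *: p.1, p.2) | p <- d x] ++ d y)),
      (forall (c : C) (phi psi xi : C -> F), lfun phi -> lfun psi -> lfun xi ->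
         \sum_(p <- d c) (\sum_(q <- d p.1) phi q.1 * psi q.2) * xi p.2 =
         \sum_(p <- d c) phi p.1 * (\sum_(q <- d p.2) psi q.1 * xi q.2)) &
      (forall c : C, \sum_(p <- d c) e p.1 *: p.2 = c /\
                     \sum_(p <- d c) e p.2 *: p.1 = c)].

Definition coalg_map (C D : lmodType F) (dC : C -> seq (C * C)) (eC : C -> F)
    (dD : D -> seq (D * D)) (eD : D -> F) (f : C -> D) : Prop :=
  [/\ lmap f,
      (forall c : C, teq2 (dD (f c)) [seq (f p.1, f p.2) | p <- dC c]) &
      (forall c : C, eD (f c) = eC c)].

(* Hopf heap: chi a b c = [a, b, c], a coalgebra map C (x) C^co (x) C -> C *)
Definition hopf_heap (C : lmodType F) (d : C -> seq (C * C)) (e : C -> F)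
    (chi : C -> C -> C -> C) : Prop :=
  [/\ coalgebra d e,
      (forall b c : C, lmap (fun a => chi a b c)) /\
      (forall a c : C, lmap (fun b => chi a b c)) /\
      (forall a b : C, lmap (chi a b)),
      (forall a b c : C,
         teq2 (d (chi a b c))
           [seq (chi p.1 qr.1.2 qr.2.1, chi p.2 qr.1.1 qr.2.2)
              | p <- d a, qr <- [seq (q, r) | q <- d b, r <- d c]]) /\
      (forall a b c : C, e (chi a b c) = e a * e b * e c),
      (forall a b c x y : C, chi (chi a b c) x y = chi a b (chi c x y)) &
      (forall a c : C, \sum_(p <- d c) chi p.1 p.2 a = e c *: a /\
                       \sum_(p <- d c) chi a p.1 p.2 = e c *: a)].

Definition hh_morph (C D : lmodType F) (dC : C -> seq (C * C)) (eC : C -> F)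
    (chiC : C -> C -> C -> C) (dD : D -> seq (D * D)) (eD : D -> F)
    (chiD : D -> D -> D -> D) (f : C -> D) : Prop :=
  coalg_map dC eC dD eD f /\
  forall a b c : C, f (chiC a b c) = chiD (f a) (f b) (f c).

Definition grunspan (C : lmodType F) (d : C -> seq (C * C)) (e : C -> F)
    (chi : C -> C -> C -> C) (th : C -> C) : Prop :=
  coalg_map d e d e th /\
  forall a b c x y : C, chi (chi a b (th c)) x y = chi a (chi x c b) y.

Definition feq (T U : Type) (x y : T -> U) : Prop := forall c, x c = y c.
Definition fcomb (T : Type) (V : lmodType F) (a : F) (x y : T -> V) : T -> V :=
  fun c => a *: x c + y c.
Definition fscale (T : Type) (V : lmodType F) (a : F) (x : T -> V) : T -> V :=
  fun c => a *: x c.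
Definition Tmul (T : Type) (x y : T -> T) : T -> T := fun c => y (x c).
Definition Tone (T : Type) : T -> T := fun c => c.

Definition tau (C : lmodType F) (chi : C -> C -> C -> C) (a b : C) : C -> C :=
  fun c => chi c a b.

Definition inTn (C : lmodType F) (chi : C -> C -> C -> C) (x : C -> C) : Prop :=
  exists s : seq (F * C * C),
    forall c, x c = \sum_(t <- s) t.1.1 *: tau chi t.1.2 t.2 c.

Definition lin_on (C : lmodType F) (P : (C -> C) -> Prop) (phi : (C -> C) -> F) : Prop :=
  (forall x y, P x -> feq x y -> phi x = phi y) /\
  (forall a x y, P x -> P y -> phi (fcomb a x y) = a * phi x + phi y).

Definition teqT (C : lmodType F) (P : (C -> C) -> Prop)
    (s t : seq ((C -> C) * (C -> C))) : Prop :=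
  forall phi psi, lin_on P phi -> lin_on P psi ->
    \sum_(p <- s) phi p.1 * psi p.2 = \sum_(p <- t) phi p.1 * psi p.2.

Definition bialgebra_on (C : lmodType F) (P : (C -> C) -> Prop)
    (dT : (C -> C) -> seq ((C -> C) * (C -> C))) (eT : (C -> C) -> F) : Prop :=
  [/\
      (forall a x y, P x -> P y -> P (fcomb a x y)) /\ P (@Tone C) /\
      (forall x y, P x -> P y -> P (Tmul x y)),
      (forall a x x' y, P x -> P x' -> P y ->
         feq (Tmul (fcomb a x x') y) (fcomb a (Tmul x y) (Tmul x' y)) /\
         feq (Tmul y (fcomb a x x')) (fcomb a (Tmul y x) (Tmul y x'))) /\
      (forall x y z, P x -> P y -> P z -> feq (Tmul (Tmul x y) z) (Tmul x (Tmul y z))) /\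
      (forall x, P x -> feq (Tmul (@Tone C) x) x /\ feq (Tmul x (@Tone C)) x),
      (forall x, P x -> allP (fun p => P p.1 /\ P p.2) (dT x)) /\
      (forall x y, P x -> feq x y -> teqT P (dT x) (dT y)) /\
      (forall a x y, P x -> P y ->
         teqT P (dT (fcomb a x y)) ([seq (fscale a p.1, p.2) | p <- dT x] ++ dT y)) /\
      lin_on P eT,
      (forall x phi psi xi, P x -> lin_on P phi -> lin_on P psi -> lin_on P xi ->
         \sum_(p <- dT x) (\sum_(q <- dT p.1) phi q.1 * psi q.2) * xi p.2 =
         \sum_(p <- dT x) phi p.1 * (\sum_(q <- dT p.2) psi q.1 * xi q.2)) /\
      (forall x, P x ->
         feq (fun c => \sum_(p <- dT x) eT p.1 *: p.2 c) x /\
         feq (fun c => \sum_(p <- dT x) eT p.2 *: p.1 c) x) &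
      (forall x y, P x -> P y ->
         teqT P (dT (Tmul x y)) [seq (Tmul p.1 q.1, Tmul p.2 q.2) | p <- dT x, q <- dT y]) /\
      teqT P (dT (@Tone C)) [:: (@Tone C, @Tone C)] /\
      (forall x y, P x -> P y -> eT (Tmul x y) = eT x * eT y) /\
      eT (@Tone C) = 1].

Definition antipode_on (C : lmodType F) (P : (C -> C) -> Prop)
    (dT : (C -> C) -> seq ((C -> C) * (C -> C))) (eT : (C -> C) -> F)
    (S : (C -> C) -> (C -> C)) : Prop :=
  [/\ forall x, P x -> P (S x),
      forall x y, P x -> feq x y -> feq (S x) (S y),
      forall a x y, P x -> P y -> feq (S (fcomb a x y)) (fcomb a (S x) (S y)) &
      forall x, P x ->
        feq (fun c => \sum_(p <- dT x) Tmul (S p.1) p.2 c) (fun c => eT x *: c) /\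
        feq (fun c => \sum_(p <- dT x) Tmul p.1 (S p.2) c) (fun c => eT x *: c)].

Definition Tn_coalg_spec (C : lmodType F) (dC : C -> seq (C * C)) (eC : C -> F)
    (chi : C -> C -> C -> C)
    (dT : (C -> C) -> seq ((C -> C) * (C -> C))) (eT : (C -> C) -> F) : Prop :=
  [/\ forall x, inTn chi x -> allP (fun p => inTn chi p.1 /\ inTn chi p.2) (dT x),
      forall x y, inTn chi x -> feq x y -> teqT (inTn chi) (dT x) (dT y),
      forall a x y, inTn chi x -> inTn chi y ->
        teqT (inTn chi) (dT (fcomb a x y)) ([seq (fscale a p.1, p.2) | p <- dT x] ++ dT y),
      lin_on (inTn chi) eT &
      (forall a b : C, teqT (inTn chi) (dT (tau chi a b))
                        [seq (tau chi p.2 q.1, tau chi p.1 q.2) | p <- dC a, q <- dC b]) /\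
      (forall a b : C, eT (tau chi a b) = eC a * eC b)].

Definition Tn_antipode_spec (C : lmodType F) (chi : C -> C -> C -> C) (th : C -> C)
    (S : (C -> C) -> (C -> C)) : Prop :=
  [/\ forall x, inTn chi x -> inTn chi (S x),
      forall x y, inTn chi x -> feq x y -> feq (S x) (S y),
      forall a x y, inTn chi x -> inTn chi y -> feq (S (fcomb a x y)) (fcomb a (S x) (S y)) &
      forall a b : C, feq (S (tau chi a b)) (tau chi b (th a))].

Definition Tn_map_spec (C D : lmodType F) (chiC : C -> C -> C -> C) (chiD : D -> D -> D -> D)
    (f : C -> D) (T : (C -> C) -> (D -> D)) : Prop :=
  [/\ forall x, inTn chiC x -> inTn chiD (T x),
      forall x y, inTn chiC x -> feq x y -> feq (T x) (T y),
      forall a x y, inTn chiC x -> inTn chiC y -> feq (T (fcomb a x y)) (fcomb a (T x) (T y)) &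
      forall a b : C, feq (T (tau chiC a b)) (tau chiD (f a) (f b))].

(* T is a bialgebra map (it is linear by Tn_map_spec) *)
Definition bialg_map (C D : lmodType F) (PC : (C -> C) -> Prop) (PD : (D -> D) -> Prop)
    (dTC : (C -> C) -> seq ((C -> C) * (C -> C))) (eTC : (C -> C) -> F)
    (dTD : (D -> D) -> seq ((D -> D) * (D -> D))) (eTD : (D -> D) -> F)
    (T : (C -> C) -> (D -> D)) : Prop :=
  [/\ forall x y, PC x -> PC y -> feq (T (Tmul x y)) (Tmul (T x) (T y)),
      feq (T (@Tone C)) (@Tone D),
      forall x, PC x -> teqT PD (dTD (T x)) [seq (T p.1, T p.2) | p <- dTC x] &
      forall x, PC x -> eTD (T x) = eTC x].

End HopfHeaps.

(* Main.v *)
Require Import Defs.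
From mathcomp Require Import all_boot all_order all_algebra.
From mathcomp Require classical_sets.
From Stdlib Require Import Classical ClassicalEpsilon.
From mathcomp Require Import ring.
Import GRing.Theory.
Local Open Scope ring_scope.
Set Implicit Arguments. Unset Strict Implicit. Unset Printing Implicit Defensive.

Section LA.
Variable F : fieldType.

Section Lin.
Variables (V W : lmodType F).

Lemma lfun0 (phi : V -> F) : lfun phi -> phi 0 = 0.
Proof. move=> H; have := H 1 0 0; rewrite scaler0 add0r mul1r.
by move/(congr1 (fun t => t - phi 0)); rewrite subrr addrK. Qed.
Lemma lfunD (phi : V -> F) x y : lfun phi -> phi (x + y) = phi x + phi y.
Proof. by move=> H; rewrite -[x in LHS]scale1r H mul1r. Qed.
Lemma lfunZ (phi : V -> F) a x : lfun phi -> phi (a *: x) = a * phi x.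
Proof. by move=> H; rewrite -[_ *: _]addr0 H (lfun0 H) addr0. Qed.
Lemma lfunN (phi : V -> F) x : lfun phi -> phi (- x) = - phi x.
Proof. by move=> H; rewrite -scaleN1r lfunZ // mulN1r. Qed.
Lemma lfunB (phi : V -> F) x y : lfun phi -> phi (x - y) = phi x - phi y.
Proof. by move=> H; rewrite lfunD // lfunN. Qed.
Lemma lfun_sum (phi : V -> F) I (l : seq I) (f : I -> V) : lfun phi ->
  phi (\sum_(i <- l) f i) = \sum_(i <- l) phi (f i).
Proof.
move=> H; elim: l => [|i l IH]; first by rewrite !big_nil lfun0.
by rewrite !big_cons lfunD // IH.
Qed.

Lemma lmap0 (f : V -> W) : lmap f -> f 0 = 0.
Proof. move=> H; have := H 1 0 0; rewrite scaler0 add0r scale1r.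
by move/(congr1 (fun t => t - f 0)); rewrite subrr addrK. Qed.
Lemma lmapD (f : V -> W) x y : lmap f -> f (x + y) = f x + f y.
Proof. by move=> H; rewrite -[x in LHS]scale1r H scale1r. Qed.
Lemma lmapZ (f : V -> W) a x : lmap f -> f (a *: x) = a *: f x.
Proof. by move=> H; rewrite -[_ *: _]addr0 H (lmap0 H) addr0. Qed.
Lemma lmapN (f : V -> W) x : lmap f -> f (- x) = - f x.
Proof. by move=> H; rewrite -scaleN1r lmapZ // scaleN1r. Qed.
Lemma lmapB (f : V -> W) x y : lmap f -> f (x - y) = f x - f y.
Proof. by move=> H; rewrite lmapD // lmapN. Qed.
Lemma lmap_sum (f : V -> W) I (l : seq I) (g : I -> V) : lmap f ->
  f (\sum_(i <- l) g i) = \sum_(i <- l) f (g i).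
Proof.
move=> H; elim: l => [|i l IH]; first by rewrite !big_nil lmap0.
by rewrite !big_cons lmapD // IH.
Qed.

Lemma lfun_comp (phi : W -> F) (f : V -> W) : lfun phi -> lmap f -> lfun (fun x => phi (f x)).
Proof. by move=> H1 H2 a x y; rewrite H2 H1. Qed.

End Lin.

Lemma allP_In (T : Type) (P : T -> Prop) (l : seq T) :
  Defs.allP P l <-> (forall x, List.In x l -> P x).
Proof.
elim: l => [|x l IH] /=; first by split.
split; first by move=> [Px /IH Hl] y [<-|/Hl].
by move=> H; split; [apply: H; left | apply/IH => y Hy; apply: H; right].
Qed.

Lemma big_allP (T : Type) (R : nmodType) (P : T -> Prop) (l : seq T) (f g : T -> R) :
  Defs.allP P l -> (forall i, P i -> f i = g i) ->
  \sum_(i <- l) f i = \sum_(i <- l) g i.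
Proof.
elim: l => [|x l IH] /=; first by rewrite !big_nil.
by move=> [Px Pl] H; rewrite !big_cons H // IH.
Qed.

Lemma sep (V : lmodType F) (w : V) : w != 0 -> exists psi, lfun psi /\ psi w = 1.
Proof.
move=> w0.
pose P (W : classical_sets.set V) :=
  (forall a x y, W x -> W y -> W (a *: x + y)) /\ ~ W w.
have [A [[Acl Aw] Amax]] : exists A, P A /\ (forall B, classical_sets.proper A B -> ~ P B).
  apply: classical_sets.Zorn_bigcup => G GP Gtot; split.
  - move=> a x y [X GX Xx] [Y GY Yy].
    have [XY|YX] := Gtot _ _ GX GY.
    + exists Y => //; apply: (proj1 (GP _ GY)) => //; exact: XY.
    + exists X => //; apply: (proj1 (GP _ GX)) => //; exact: YX.
  - by move=> [X GX Xw]; apply: (proj2 (GP _ GX)).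
pose A0 (y : V) := A y \/ y = 0.
have A00 : A0 0 by right.
have A0cl : forall a x y, A0 x -> A0 y -> A0 (a *: x + y).
  move=> a x y [Ax|->] [Ay|->].
  - by left; apply: Acl.
  - left; have A0' : A 0 by rewrite -(addNr x) -scaleN1r; apply: Acl.
    by rewrite addr0 -[_ *: _]addr0; apply: Acl.
  - by rewrite scaler0 add0r; left.
  - by rewrite scaler0 addr0; right.
have A0w : ~ A0 w by move=> [//|/eqP]; rewrite (negPf w0).
have A0sub : forall x y, A0 x -> A0 y -> A0 (x - y).
  move=> x y Ax Ay; rewrite addrC -scaleN1r; exact: A0cl.
have A0Z : forall a x, A0 x -> A0 (a *: x).
  by move=> a x Ax; rewrite -[_ *: _]addr0; exact: A0cl.
have uniq : forall x a b, A0 (x - a *: w) -> A0 (x - b *: w) -> a = b.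
  move=> x a b Ha Hb; apply: NNPP => ab.
  have := A0Z ((a - b)^-1) _ (A0sub _ _ Hb Ha).
  have -> : x - b *: w - (x - a *: w) = (a - b) *: w.
    by rewrite opprD opprK addrACA subrr add0r addrC -scalerBl.
  rewrite scalerA mulVf ?scale1r //.
  by rewrite subr_eq0; apply/eqP.
have ex : forall x, exists a, A0 (x - a *: w).
  move=> x; apply: NNPP => Hn.
  have Hx : forall a, ~ A0 (x - a *: w) by move=> a Ha; apply: Hn; exists a.
  pose B (y : V) := exists a u, A0 u /\ y = u + a *: x.
  have PB : ~ P B.
    apply: Amax; split.
    - by move=> y Ay; exists 0, y; split; [left|rewrite scale0r addr0].
    - move=> BA; have : B x by exists 1, 0; split; [right|rewrite scale1r add0r].
      move/BA => Ax; apply: (Hx 0); left; by rewrite scale0r subr0.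
  apply: PB; split.
  - move=> a y1 y2 [b1 [u1 [Hu1 ->]]] [b2 [u2 [Hu2 ->]]].
    exists (a * b1 + b2), (a *: u1 + u2); split; first exact: A0cl.
    by rewrite scalerDr scalerDl scalerA addrACA.
  - move=> [b [u [Hu wE]]].
    have [b0|b0] := eqVneq b 0.
      by apply: A0w; move: wE; rewrite b0 scale0r addr0 => ->.
    apply: (Hx b^-1); rewrite wE scalerDr scalerA mulVf // scale1r opprD addrCA subrr addr0.
    by rewrite -scaleNr; apply: A0Z.
pose psi x := proj1_sig (constructive_indefinite_description _ (ex x)).
have psiP : forall x, A0 (x - psi x *: w).
  by move=> x; rewrite /psi; case: constructive_indefinite_description.
exists psi; split.
- move=> a x y; apply: (uniq (a *: x + y)); first exact: psiP.
  have := A0cl a _ _ (psiP x) (psiP y).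
  by rewrite scalerBr scalerA addrACA -opprD -scalerDl.
- by apply: (uniq w); [exact: psiP | rewrite scale1r subrr].
Qed.

Lemma sep_eq (V : lmodType F) (x y : V) :
  (forall psi, lfun psi -> psi x = psi y) -> x = y.
Proof.
move=> H; apply/eqP; rewrite -subr_eq0; apply/negPn/negP => /sep [psi [Hp Hd]].
by move: Hd; rewrite lfunB // H // subrr => /eqP; rewrite eq_sym oner_eq0.
Qed.

Definition piL (V : lmodType F) (L : seq ((V -> F) * V)) (x : V) : V :=
  \sum_(q <- L) q.1 x *: q.2.

Lemma piL_lin (V : lmodType F) (L : seq ((V -> F) * V)) :
  Defs.allP (fun q => lfun q.1) L -> lmap (piL L).
Proof.
rewrite /piL; elim: L => [|q L IH] /=.
  by move=> _ a x y; rewrite !big_nil scaler0 addr0.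
move=> [Hq HL] a x y; rewrite !big_cons IH // Hq scalerDl scalerDr -scalerA.
by rewrite addrACA.
Qed.

Lemma coordL (V : lmodType F) (vs : seq V) :
  exists L : seq ((V -> F) * V),
    Defs.allP (fun q => lfun q.1) L /\ (forall x, x \in vs -> piL L x = x).
Proof.
suff [L [H1 [H2 H3]]] : exists L : seq ((V -> F) * V),
    Defs.allP (fun q => lfun q.1) L /\ Defs.allP (fun q => piL L q.2 = q.2) L /\
    (forall x, x \in vs -> piL L x = x) by exists L.
elim: vs => [|v vs [L [H1 [H2 H3]]]].
  by exists [::]; split=> //; split.
have pp : forall x, piL L (piL L x) = piL L x.
  move=> x; transitivity (piL L (\sum_(q <- L) q.1 x *: q.2)) => //; rewrite lmap_sum; last exact: piL_lin.
  rewrite [RHS]/piL; apply: (@big_allP _ V _ L _ _ H2) => q Hq; rewrite lmapZ; last exact: piL_lin.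
  by rewrite Hq.
set w := v - piL L v.
have [w0|w0] := eqVneq w 0.
  exists L; split=> //; split=> // x; rewrite inE => /orP[/eqP->|/H3 //].
  by apply/eqP; rewrite eq_sym -subr_eq0 -/w w0.
have [psi0 [Hp0 Hw]] := sep w0.
pose psi x := psi0 (x - piL L x).
have Hpsi : lfun psi.
  apply: lfun_comp => // a x y; rewrite (piL_lin H1) scalerBr.
  by rewrite opprD addrACA.
have pw : piL L w = 0 by rewrite /w (lmapB _ _ (piL_lin H1)) pp subrr.
have psiw : psi w = 1 by rewrite /psi pw subr0.
have psi_fix : forall x, piL L x = x -> psi x = 0.
  by move=> x Hx; rewrite /psi Hx subrr lfun0.
have piL' : forall x, piL ((psi, w) :: L) x = psi x *: w + piL L x.
  by move=> x; rewrite /piL big_cons.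
exists ((psi, w) :: L); split; first by split.
split.
  split; first by rewrite /= piL' psiw scale1r pw addr0.
  apply/allP_In => q qL; rewrite piL'.
  by move/allP_In: H2 => /(_ q qL) Hq; rewrite Hq psi_fix // scale0r add0r.
move=> x; rewrite inE => /orP[/eqP->|/H3 Hx].
  by rewrite piL' /psi -/w Hw scale1r /w subrK.
by rewrite piL' Hx psi_fix // scale0r add0r.
Qed.

Lemma tens2 (V W : lmodType F) (s t : seq (V * W)) (B : V -> W -> F) :
  teq2 s t -> (forall y, lfun (fun x => B x y)) -> (forall x, lfun (B x)) ->
  \sum_(p <- s) B p.1 p.2 = \sum_(p <- t) B p.1 p.2.
Proof.
move=> Hst HB1 HB2.
have [L [HL Hpi]] := coordL [seq p.1 | p <- s ++ t].
have E : forall l, (forall p, p \in l -> p.1 \in [seq p.1 | p <- s ++ t]) ->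
    \sum_(p <- l) B p.1 p.2 = \sum_(q <- L) \sum_(p <- l) q.1 p.1 * B q.2 p.2.
  move=> l Hl; rewrite exchange_big; apply: eq_big_seq => p pl.
  rewrite -{1}(Hpi p.1 (Hl p pl)) /piL (lfun_sum _ _ (HB1 p.2)).
  by apply: eq_bigr => q _; rewrite (lfunZ _ _ (HB1 p.2)).
rewrite !E; first (apply: (@big_allP _ F _ L _ _ HL) => q Hq; exact: Hst).
- by move=> p pt; apply: map_f; rewrite mem_cat pt orbT.
- by move=> p ps; apply: map_f; rewrite mem_cat ps.
Qed.

Lemma tens2V (V W U : lmodType F) (s t : seq (V * W)) (B : V -> W -> U) :
  teq2 s t -> (forall y, lmap (fun x => B x y)) -> (forall x, lmap (B x)) ->
  \sum_(p <- s) B p.1 p.2 = \sum_(p <- t) B p.1 p.2.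
Proof.
move=> Hst HB1 HB2; apply: sep_eq => psi Hpsi; rewrite !lfun_sum //.
apply: (tens2 (B := fun x y => psi (B x y))) => //.
- by move=> y; apply: lfun_comp.
- by move=> x; apply: lfun_comp.
Qed.
End LA.

Section HH.
Variable F : fieldType.
Variables (C : lmodType F) (d : C -> seq (C * C)) (e : C -> F) (chi : C -> C -> C -> C).
Hypothesis HH : hopf_heap d e chi.

Lemma e_lin : lfun e. Proof. by case: HH => [[_ He _ _ _] _ _ _ _]. Qed.
Lemma d_lin a x y : teq2 (d (a *: x + y)) ([seq (a *: p.1, p.2) | p <- d x] ++ d y).
Proof. by case: HH => [[_ _ Hd _ _] _ _ _ _]. Qed.
Lemma coassoc c (phi psi xi : C -> F) : lfun phi -> lfun psi -> lfun xi ->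
  \sum_(p <- d c) (\sum_(q <- d p.1) phi q.1 * psi q.2) * xi p.2 =
  \sum_(p <- d c) phi p.1 * (\sum_(q <- d p.2) psi q.1 * xi q.2).
Proof. by case: HH => [[_ _ _ Hd _] _ _ _ _]; apply: Hd. Qed.
Lemma counitL c : \sum_(p <- d c) e p.1 *: p.2 = c.
Proof. by case: HH => [[_ _ _ _ H]] _ _ _ _; case: (H c). Qed.
Lemma counitR c : \sum_(p <- d c) e p.2 *: p.1 = c.
Proof. by case: HH => [[_ _ _ _ H]] _ _ _ _; case: (H c). Qed.
Lemma chi1 b c : lmap (fun a => chi a b c). Proof. by case: HH => _ [H _]. Qed.
Lemma chi2 a c : lmap (fun b => chi a b c). Proof. by case: HH => _ [_ [H _]]. Qed.
Lemma chi3 a b : lmap (chi a b). Proof. by case: HH => _ [_ [_ H]]. Qed.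
Lemma chi_d a b c : teq2 (d (chi a b c))
   [seq (chi p.1 qr.1.2 qr.2.1, chi p.2 qr.1.1 qr.2.2)
              | p <- d a, qr <- [seq (q, r) | q <- d b, r <- d c]].
Proof. by case: HH => _ _ [H _]. Qed.
Lemma chi_e a b c : e (chi a b c) = e a * e b * e c.
Proof. by case: HH => _ _ [_ H]. Qed.
Lemma chi_assoc a b c x y : chi (chi a b c) x y = chi a b (chi c x y).
Proof. by case: HH. Qed.
Lemma unitL a c : \sum_(p <- d c) chi p.1 p.2 a = e c *: a.
Proof. by case: HH => _ _ _ _ /(_ a c) []. Qed.
Lemma unitR a c : \sum_(p <- d c) chi a p.1 p.2 = e c *: a.
Proof. by case: HH => _ _ _ _ /(_ a c) []. Qed.

Lemma exists_z : exists z, e z = 1.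
Proof.
case: HH => [[[c c0] He _ _ Hcu]] _ _ _ _.
have : exists p, p \in d c /\ e p.1 != 0.
  apply: NNPP => Hn; move: c0; case: (Hcu c) => <- _.
  rewrite big_seq_cond big1 ?eqxx // => p /andP[pin _].
  have [->|//] := eqVneq (e p.1) 0; first by rewrite scale0r.
  by move=> nz; exfalso; apply: Hn; exists p; split.
move=> [p [_ nz]]; exists ((e p.1)^-1 *: p.1).
by rewrite (lfunZ _ _ He) mulVf.
Qed.

Lemma d_bil (U : lmodType F) (B : C -> C -> U) :
  (forall y, lmap (fun x => B x y)) -> (forall x, lmap (B x)) ->
  lmap (fun y => \sum_(p <- d y) B p.1 p.2).
Proof.
move=> H1 H2 a x y /=; rewrite (tens2V (d_lin a x y) H1 H2) big_cat big_map /= scaler_sumr.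
by congr (_ + _); apply: eq_bigr => p _; rewrite (lmapZ _ _ (H1 _)).
Qed.

Lemma d_bilF (B : C -> C -> F) :
  (forall y, lfun (fun x => B x y)) -> (forall x, lfun (B x)) ->
  lfun (fun y => \sum_(p <- d y) B p.1 p.2).
Proof.
move=> H1 H2 a x y /=; rewrite (tens2 (d_lin a x y) H1 H2) big_cat big_map /= mulr_sumr.
by congr (_ + _); apply: eq_bigr => p _; rewrite (lfunZ _ _ (H1 _)).
Qed.

Lemma expand (V : lmodType F) (vs : seq V) : exists L : seq ((V -> F) * V),
  Defs.allP (fun q => lfun q.1) L /\
  forall (g : V -> F), lfun g -> forall x, x \in vs -> g x = \sum_(l <- L) l.1 x * g l.2.
Proof.
have [L [HL Hpi]] := coordL vs; exists L; split => // g Hg x Hx.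
rewrite -{1}(Hpi x Hx) /piL (lfun_sum _ _ Hg); apply: eq_bigr => l _.
by rewrite lfunZ.
Qed.

Lemma swap4 (R : nmodType) I J K M' (P : seq I) (Q : I -> seq J) (L : seq K)
   (Ms : seq M') (X : I -> J -> K -> M' -> R) :
  \sum_(p <- P) \sum_(q <- Q p) \sum_(l <- L) \sum_(m <- Ms) X p q l m =
  \sum_(l <- L) \sum_(m <- Ms) \sum_(p <- P) \sum_(q <- Q p) X p q l m.
Proof.
transitivity (\sum_(p <- P) \sum_(l <- L) \sum_(m <- Ms) \sum_(q <- Q p) X p q l m).
  apply: eq_bigr => p _; rewrite exchange_big; apply: eq_bigr => l _.
  by rewrite exchange_big.
rewrite exchange_big; apply: eq_bigr => l _; by rewrite exchange_big.
Qed.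

Lemma coassocF c (g : C -> C -> C -> F) :
  (forall y w, lfun (fun x => g x y w)) -> (forall x w, lfun (fun y => g x y w)) ->
  (forall x y, lfun (g x y)) ->
  \sum_(p <- d c) \sum_(q <- d p.1) g q.1 q.2 p.2 =
  \sum_(p <- d c) \sum_(q <- d p.2) g p.1 q.1 q.2.
Proof.
move=> h1 h2 h3.
have [L [HL EL]] := expand ([seq q.1 | p <- d c, q <- d p.1] ++ [seq p.1 | p <- d c]).
have [M [HM EM]] := expand ([seq p.2 | p <- d c] ++ [seq q.2 | p <- d c, q <- d p.2]).
have E1 : forall x y w, x \in [seq q.1 | p <- d c, q <- d p.1] ++ [seq p.1 | p <- d c] ->
    w \in [seq p.2 | p <- d c] ++ [seq q.2 | p <- d c, q <- d p.2] ->
    g x y w = \sum_(l <- L) \sum_(m <- M) l.1 x * (m.1 w * g l.2 y m.2).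
  move=> x y w Hx Hw; rewrite (EL _ (h1 y w) x Hx); apply: eq_bigr => l _.
  by rewrite (EM _ (h3 l.2 y) w Hw) mulr_sumr.
transitivity (\sum_(l <- L) \sum_(m <- M) \sum_(p <- d c)
     (\sum_(q <- d p.1) l.1 q.1 * g l.2 q.2 m.2) * m.1 p.2).
  transitivity (\sum_(p <- d c) \sum_(q <- d p.1) \sum_(l <- L) \sum_(m <- M)
      l.1 q.1 * (m.1 p.2 * g l.2 q.2 m.2)).
    apply: eq_big_seq => p pin; apply: eq_big_seq => q qin; apply: E1.
    - by rewrite mem_cat; apply/orP; left; apply/flatten_mapP; exists p => //; apply: map_f.
    - by rewrite mem_cat; apply/orP; left; apply: map_f.
  rewrite swap4; apply: eq_bigr => l _; apply: eq_bigr => m _.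
  apply: eq_bigr => p _; rewrite big_distrl /=.
  by apply: eq_bigr => q _; ring.
transitivity (\sum_(l <- L) \sum_(m <- M) \sum_(p <- d c)
     l.1 p.1 * (\sum_(q <- d p.2) g l.2 q.1 m.2 * m.1 q.2)).
  apply: (@big_allP _ F _ L _ _ HL) => l Hl.
  apply: (@big_allP _ F _ M _ _ HM) => m Hm.
  exact: (coassoc c Hl (h2 l.2 m.2) Hm).
apply/esym; transitivity (\sum_(p <- d c) \sum_(q <- d p.2) \sum_(l <- L) \sum_(m <- M)
      l.1 p.1 * (m.1 q.2 * g l.2 q.1 m.2)).
  apply: eq_big_seq => p pin; apply: eq_big_seq => q qin; apply: E1.
  - by rewrite mem_cat; apply/orP; right; apply: map_f.
  - by rewrite mem_cat; apply/orP; right; apply/flatten_mapP; exists p => //; apply: map_f.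
rewrite swap4; apply: eq_bigr => l _; apply: eq_bigr => m _.
apply: eq_bigr => p _; rewrite big_distrr /=.
by apply: eq_bigr => q _; ring.
Qed.

Lemma coassocV (U : lmodType F) c (G : C -> C -> C -> U) :
  (forall y w, lmap (fun x => G x y w)) -> (forall x w, lmap (fun y => G x y w)) ->
  (forall x y, lmap (G x y)) ->
  \sum_(p <- d c) \sum_(q <- d p.1) G q.1 q.2 p.2 =
  \sum_(p <- d c) \sum_(q <- d p.2) G p.1 q.1 q.2.
Proof.
move=> h1 h2 h3; apply: sep_eq => psi Hpsi; rewrite !lfun_sum //.
under eq_bigr do rewrite lfun_sum //.
under [RHS]eq_bigr do rewrite lfun_sum //.
apply: (@coassocF c (fun x y w => psi (G x y w))).
- by move=> y w; apply: lfun_comp.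
- by move=> x w; apply: lfun_comp.
- by move=> x y; apply: lfun_comp.
Qed.

Lemma four (A B : C -> C -> F) (a0 : F) z :
  (forall y, lfun (fun x => A x y)) -> (forall x, lfun (A x)) ->
  (forall y, lfun (fun x => B x y)) -> (forall x, lfun (B x)) ->
  (forall y, \sum_(m <- d y) A m.1 m.2 = e y * a0) ->
  \sum_(r <- d z) \sum_(p <- d r.1) \sum_(q <- d r.2) A p.2 q.1 * B p.1 q.2 =
  a0 * \sum_(r <- d z) B r.1 r.2.
Proof.
move=> A1 A2 B1 B2 HA.
rewrite (@coassocF z (fun x1 x2 y => \sum_(q <- d y) A x2 q.1 * B x1 q.2)).
- rewrite mulr_sumr; apply: eq_bigr => r _ /=.
  rewrite -(@coassocF r.2 (fun x y w => A x y * B r.1 w)) /=.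
  + transitivity (\sum_(p <- d r.2) a0 * (e p.1 * B r.1 p.2)).
      by apply: eq_bigr => p _; rewrite -big_distrl /= HA mulrA [a0 * _]mulrC.
    rewrite -mulr_sumr; congr (_ * _).
    rewrite -{2}(counitL r.2) (lfun_sum _ _ (B2 r.1)); apply: eq_bigr => p _.
    by rewrite lfunZ.
  + by move=> y w a x x'; rewrite A1 mulrDl mulrA.
  + by move=> x w a y y'; rewrite A2 mulrDl mulrA.
  + by move=> x y a w w'; rewrite B2 mulrDr mulrCA.
- move=> y w a x x' /=; rewrite mulr_sumr -big_split /=; apply: eq_bigr => q _.
  by rewrite B1 mulrDr mulrCA.
- move=> x w a y y' /=; rewrite mulr_sumr -big_split /=; apply: eq_bigr => q _.
  by rewrite A1 mulrDl mulrA.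
- move=> x y; apply: (@d_bilF (fun u v => A y u * B x v)) => [w|v] a u u' /=.
  + by rewrite A2 mulrDl mulrA.
  + by rewrite B2 mulrDr mulrCA.
Qed.
End HH.

Lemma big_In (T : Type) (R : nmodType) (l : seq T) (f g : T -> R) :
  (forall i, List.In i l -> f i = g i) -> \sum_(i <- l) f i = \sum_(i <- l) g i.
Proof.
elim: l => [|x l IH] H; first by rewrite !big_nil.
by rewrite !big_cons H ?IH //=; [move=> i Hi; apply: H; right | left].
Qed.

Lemma In_mem (T : eqType) (x : T) s : List.In x s -> x \in s.
Proof. by elim: s => [|y s IH] //= [->|/IH]; rewrite inE ?eqxx // => ->; rewrite orbT. Qed.

Lemma In_map_f (T U : Type) (h : T -> U) x s : List.In x s -> List.In (h x) (map h s).
Proof. by elim: s => [|y s IH] //= [->|/IH]; [left|right]. Qed.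

Lemma In_flatten (T : Type) (x : T) (l : seq T) ss : List.In x l -> List.In l ss ->
  List.In x (flatten ss).
Proof.
elim: ss => [|l' ss IH] //= Hx [E|Hl]; rewrite List.in_app_iff.
  by left; rewrite E.
by right; apply: IH.
Qed.

Lemma In_allpairs (S T U : Type) (h : S -> T -> U) x y (s : seq S) (t : S -> seq T) :
  List.In x s -> List.In y (t x) -> List.In (h x y) [seq h x y | x <- s, y <- t x].
Proof.
move=> Hx Hy; apply: (In_flatten (l := [seq h x y | y <- t x])).
  exact: In_map_f.
exact: (In_map_f (fun x => [seq h x y | y <- t x])).
Qed.

Lemma allP_flatten (T : Type) (P : T -> Prop) ss :
  (forall l, List.In l ss -> Defs.allP P l) -> Defs.allP P (flatten ss).
Proof.
move=> H; apply/allP_In => x Hx.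
have [l [Hl Hxl]] : exists l, List.In l ss /\ List.In x l.
  elim: ss Hx {H} => [|l ss IH] //= /List.in_app_iff [H|/IH [l' [H1 H2]]].
    by exists l; split; [left|].
  by exists l'; split; [right|].
by move/allP_In: (H l Hl); apply.
Qed.

Lemma In_flatten_inv (T : Type) (x : T) ss : List.In x (flatten ss) ->
  exists l, List.In l ss /\ List.In x l.
Proof.
elim: ss => [|l ss IH] //= /List.in_app_iff [H|/IH [l' [H1 H2]]].
  by exists l; split; [left|].
by exists l'; split; [right|].
Qed.

Lemma In_map_inv (T U : Type) (h : T -> U) y s : List.In y (map h s) ->
  exists x, List.In x s /\ y = h x.
Proof.
elim: s => [|x s IH] //= [<-|/IH [x' [H1 H2]]]; first by exists x; split; [left|].
by exists x'; split; [right|].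
Qed.

Section Tn.
Variable F : fieldType.
Variables (C : lmodType F) (d : C -> seq (C * C)) (e : C -> F) (chi : C -> C -> C -> C).
Hypothesis HH : hopf_heap d e chi.

Definition tsumT (s : seq (F * C * C)) : C -> C :=
  fun c => \sum_(t <- s) t.1.1 *: tau chi t.1.2 t.2 c.
Definition canT (a b : C) : seq ((C -> C) * (C -> C)) :=
  [seq (tau chi p.2 q.1, tau chi p.1 q.2) | p <- d a, q <- d b].
Definition Pd (l : seq ((C -> C) * (C -> C))) (phi psi : (C -> C) -> F) : F :=
  \sum_(p <- l) phi p.1 * psi p.2.
Notation P := (inTn chi).

Lemma inTn_tsum s : P (tsumT s). Proof. by exists s. Qed.
Lemma inTn_tau a b : P (tau chi a b).
Proof. by exists [:: (1, a, b)] => c; rewrite big_cons big_nil addr0 scale1r. Qed.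
Lemma inTn_feq x y : P x -> feq x y -> P y.
Proof. by move=> [s Hs] Hxy; exists s => c; rewrite -Hxy. Qed.
Lemma tsum_cons t s : feq (tsumT (t :: s)) (fcomb t.1.1 (tau chi t.1.2 t.2) (tsumT s)).
Proof. by move=> c; rewrite /tsumT big_cons. Qed.
Lemma inTn_fcomb a x y : P x -> P y -> P (fcomb a x y).
Proof.
move=> [s Hs] [s' Hs']; exists ([seq (a * t.1.1, t.1.2, t.2) | t <- s] ++ s') => c.
rewrite /fcomb Hs Hs' big_cat big_map scaler_sumr; congr (_ + _).
by apply: eq_bigr => t _; rewrite scalerA.
Qed.
Lemma inTn_zero : P (fun _ => 0).
Proof. by exists [::] => c; rewrite big_nil. Qed.
Lemma tsum_lin s : lmap (tsumT s).
Proof.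
move=> a x y; rewrite /tsumT scaler_sumr -big_split; apply: eq_bigr => t _ /=.
by rewrite /tau (chi1 HH) scalerDr !scalerA mulrC.
Qed.
Lemma inTn_lin x : P x -> lmap x.
Proof. by move=> [s Hs] a u v; rewrite !Hs; exact: tsum_lin. Qed.
Lemma inTn_chi x c y w : P x -> x (chi c y w) = chi c y (x w).
Proof.
move=> [s Hs]; rewrite !Hs /tsumT (lmap_sum _ _ (chi3 HH c y)).
by apply: eq_bigr => t _; rewrite /tau (chi_assoc HH) (lmapZ _ _ (chi3 HH c y)).
Qed.
Lemma inTn_Tmul x y : P x -> P y -> P (Tmul x y).
Proof.
move=> [s Hs] Py; exists [seq (t.1.1, t.1.2, y t.2) | t <- s] => c.
rewrite /Tmul Hs /tsumT (lmap_sum _ _ (inTn_lin Py)) big_map; apply: eq_bigr => t _.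
by rewrite (lmapZ _ _ (inTn_lin Py)) /tau inTn_chi.
Qed.
Lemma Tone_tsum z : e z = 1 -> feq (@Tone C) (tsumT [seq (1, p.1, p.2) | p <- d z]).
Proof.
move=> ez c; rewrite /tsumT big_map /Tone /=.
under eq_bigr do rewrite scale1r.
by rewrite /tau (unitR HH) ez scale1r.
Qed.
Lemma inTn_one : P (@Tone C).
Proof.
have [z ez] := exists_z HH; apply: (inTn_feq (inTn_tsum [seq (1, p.1, p.2) | p <- d z])).
by move=> c; rewrite (Tone_tsum ez).
Qed.

Lemma QtsumF (Q : (C -> C) -> F) :
  (forall x y, P x -> feq x y -> Q x = Q y) ->
  (forall a x y, P x -> P y -> Q (fcomb a x y) = a * Q x + Q y) ->
  forall s, Q (tsumT s) = \sum_(t <- s) t.1.1 * Q (tau chi t.1.2 t.2).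
Proof.
move=> Hf Hl; elim=> [|t s IH].
  rewrite big_nil; have E : Q (fcomb 1 (tsumT [::]) (tsumT [::])) = Q (tsumT [::]).
    by apply: Hf; [apply: inTn_fcomb; apply: inTn_tsum | move=> c; rewrite /fcomb /tsumT !big_nil scaler0 addr0].
  move: E; rewrite Hl ?mul1r; try exact: inTn_tsum.
  by move/(congr1 (fun r => r - Q (tsumT [::]))); rewrite addrK subrr.
rewrite (Hf _ _ (inTn_tsum _) (tsum_cons t s)) Hl ?IH ?big_cons //.
  exact: inTn_tau.
exact: inTn_tsum.
Qed.

Lemma Qtsum (V : lmodType F) (Q : (C -> C) -> V) :
  (forall x y, P x -> feq x y -> Q x = Q y) ->
  (forall a x y, P x -> P y -> Q (fcomb a x y) = a *: Q x + Q y) ->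
  forall s, Q (tsumT s) = \sum_(t <- s) t.1.1 *: Q (tau chi t.1.2 t.2).
Proof.
move=> Hf Hl; elim=> [|t s IH].
  rewrite big_nil; have E : Q (fcomb 1 (tsumT [::]) (tsumT [::])) = Q (tsumT [::]).
    by apply: Hf; [apply: inTn_fcomb; apply: inTn_tsum | move=> c; rewrite /fcomb /tsumT !big_nil scaler0 addr0].
  move: E; rewrite Hl ?scale1r; try exact: inTn_tsum.
  by move/(congr1 (fun r => r - Q (tsumT [::]))); rewrite addrK subrr.
rewrite (Hf _ _ (inTn_tsum _) (tsum_cons t s)) Hl ?IH ?big_cons //.
  exact: inTn_tau.
exact: inTn_tsum.
Qed.

Lemma lin_on_tsum phi s : lin_on P phi ->
  phi (tsumT s) = \sum_(t <- s) t.1.1 * phi (tau chi t.1.2 t.2).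
Proof. by move=> [H1 H2]; apply: QtsumF. Qed.

Lemma lin_on_zero phi : lin_on P phi -> phi (fun _ => 0) = 0.
Proof.
move=> Hp; transitivity (phi (tsumT [::])); last by rewrite lin_on_tsum // big_nil.
by case: Hp => H1 _; apply: H1; [exact: inTn_zero | move=> c; rewrite /tsumT big_nil].
Qed.

Lemma lin_on_scale phi a x : lin_on P phi -> P x -> phi (fscale a x) = a * phi x.
Proof.
move=> Hp Px; case: (Hp) => H1 H2.
rewrite -(H1 (fcomb a x (fun _ => 0))); last by move=> c; rewrite /fcomb /fscale addr0.
  by rewrite H2 ?lin_on_zero ?addr0 //; exact: inTn_zero.
by apply: inTn_fcomb => //; exact: inTn_zero.
Qed.

Lemma lin_on_ev (alpha : C -> F) u : lfun alpha -> lin_on P (fun f => alpha (f u)).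
Proof. by move=> Ha; split=> [x y _ ->|a x y _ _] //; rewrite /fcomb Ha. Qed.

Lemma lin_on_tauU phi w : lin_on P phi -> lfun (fun v => phi (tau chi w v)).
Proof.
move=> [H1 H2] a x y; rewrite -H2; try exact: inTn_tau.
by apply: H1; [exact: inTn_tau | move=> c; rewrite /fcomb /tau (chi3 HH)].
Qed.

Lemma lin_on_tauD phi v : lin_on P phi -> lfun (fun u => phi (tau chi u v)).
Proof.
move=> [H1 H2] a x y; rewrite -H2; try exact: inTn_tau.
by apply: H1; [exact: inTn_tau | move=> c; rewrite /fcomb /tau (chi2 HH)].
Qed.

Lemma lin_on_TmulL phi g : lin_on P phi -> P g -> lin_on P (fun f => phi (Tmul f g)).
Proof.
move=> [H1 H2] Pg; split.
  by move=> x y Px Hxy; apply: H1; [exact: inTn_Tmul | move=> c; rewrite /Tmul Hxy].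
move=> a x y Px Py; rewrite -H2; try exact: inTn_Tmul.
apply: H1; first by apply: inTn_Tmul => //; exact: inTn_fcomb.
by move=> c; rewrite /Tmul /fcomb (inTn_lin Pg).
Qed.

Lemma lin_on_TmulR phi g : lin_on P phi -> P g -> lin_on P (fun f => phi (Tmul g f)).
Proof.
move=> [H1 H2] Pg; split.
  by move=> x y Px Hxy; apply: H1; [exact: inTn_Tmul | move=> c; rewrite /Tmul Hxy].
move=> a x y Px Py; rewrite -H2; try exact: inTn_Tmul.
by apply: H1; [apply: inTn_Tmul => //; exact: inTn_fcomb | move=> c].
Qed.

Lemma lin_on_Tmul_any phi f g : lin_on P phi -> P f -> P g -> lin_on P phi.
Proof. by []. Qed.

Section Spec.
Variables (dT : (C -> C) -> seq ((C -> C) * (C -> C))) (eT : (C -> C) -> F).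
Hypothesis Hs : Tn_coalg_spec d e chi dT eT.

Lemma dT_P x : P x -> Defs.allP (fun p => P p.1 /\ P p.2) (dT x).
Proof. by case: Hs => H _ _ _ _; apply: H. Qed.

Lemma dT_feq x y phi psi : lin_on P phi -> lin_on P psi -> P x -> feq x y ->
  Pd (dT x) phi psi = Pd (dT y) phi psi.
Proof. by case: Hs => _ H _ _ _ Hp Hq Px Hxy; apply: H. Qed.

Lemma dT_tsum s phi psi : lin_on P phi -> lin_on P psi ->
  Pd (dT (tsumT s)) phi psi = \sum_(t <- s) t.1.1 * Pd (canT t.1.2 t.2) phi psi.
Proof.
move=> Hp Hq; case: (Hs) => H1 H2 H3 _ [H5 _].
rewrite (@QtsumF (fun x => Pd (dT x) phi psi)).
- by apply: eq_bigr => t _; rewrite /Pd (H5 t.1.2 t.2).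
- by move=> x y Px Hxy; apply: H2.
- move=> a x y Px Py; rewrite /Pd (H3 a x y Px Py phi psi Hp Hq) big_cat big_map /=.
  congr (_ + _); rewrite mulr_sumr; apply: (@big_allP _ F _ _ _ _ (H1 x Px)) => p [Pp1 Pp2].
  by rewrite lin_on_scale // mulrA.
Qed.

Lemma eT_tsum s : eT (tsumT s) = \sum_(t <- s) t.1.1 * (e t.1.2 * e t.2).
Proof.
case: (Hs) => _ _ _ H4 [_ H6]; rewrite lin_on_tsum //.
by apply: eq_bigr => t _; rewrite H6.
Qed.

Lemma TnT x s u (beta : C -> (C -> C) -> F) : P x -> feq x (tsumT s) ->
  (forall y, lin_on P (beta y)) -> (forall g, lfun (fun y => beta y g)) ->
  \sum_(p <- dT x) beta (p.1 u) p.2 =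
  \sum_(t <- s) t.1.1 * \sum_(p <- canT t.1.2 t.2) beta (p.1 u) p.2.
Proof.
move=> Px Hx Hb1 Hb2.
set l2 := flatten [seq canT t.1.2 t.2 | t <- s].
have [L [HL EL]] := expand ([seq p.1 u | p <- dT x] ++ [seq p.1 u | p <- l2]).
have E : forall p, List.In p (dT x) \/ List.In p l2 ->
    beta (p.1 u) p.2 = \sum_(l <- L) l.1 (p.1 u) * beta l.2 p.2.
  move=> p Hp; apply: (EL (fun y => beta y p.2)) => //.
  rewrite mem_cat; apply/orP; case: Hp => Hp; [left|right]; apply: In_mem;
    exact: (In_map_f (fun p => p.1 u)).
transitivity (\sum_(l <- L) Pd (dT x) (fun f => l.1 (f u)) (beta l.2)).
  rewrite /Pd exchange_big; apply: big_In => p Hp; apply: E; by left.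
transitivity (\sum_(l <- L) \sum_(t <- s) t.1.1 * Pd (canT t.1.2 t.2) (fun f => l.1 (f u)) (beta l.2)).
  apply: (@big_allP _ F _ L _ _ HL) => l Hl.
  have L1 := lin_on_ev u (Hl); have L2 := Hb1 l.2.
  by rewrite (dT_feq L1 L2 Px Hx) (dT_tsum _ L1 L2).
rewrite exchange_big; apply: big_In => t Ht; rewrite -mulr_sumr; congr (_ * _).
rewrite /Pd exchange_big; apply/esym; apply: big_In => p Hp; apply: E; right.
apply: (In_flatten (l := canT t.1.2 t.2)) => //.
exact: (In_map_f (fun t => canT t.1.2 t.2)).
Qed.

End Spec.
End Tn.

Lemma allP_map (T U : Type) (P : U -> Prop) (f : T -> U) l :
  (forall x, P (f x)) -> Defs.allP P (map f l).
Proof. by move=> H; elim: l => //= x l IH; split. Qed.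

Section Exist1.
Variable F : fieldType.
Variables (C : lmodType F) (d : C -> seq (C * C)) (e : C -> F) (chi : C -> C -> C -> C).
Hypothesis HH : hopf_heap d e chi.
Notation P := (inTn chi).
Notation can := (canT d chi).
Notation tsum := (tsumT chi).

Lemma can_P a b : Defs.allP (fun p => P p.1 /\ P p.2) (can a b).
Proof.
apply: allP_flatten => l Hl; have [p [_ ->]] := In_map_inv Hl.
by apply: allP_map => q; split; apply: inTn_tau.
Qed.

Lemma Pd_can a b phi psi : Pd (can a b) phi psi =
  \sum_(p <- d a) \sum_(q <- d b) phi (tau chi p.2 q.1) * psi (tau chi p.1 q.2).
Proof. by rewrite /Pd /canT big_allpairs_dep. Qed.

Lemma Pd_can_lin u phi psi : lin_on P phi -> lin_on P psi ->
  lfun (fun v => Pd (can u v) phi psi).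
Proof.
move=> Hp Hq a x y /=; rewrite !Pd_can mulr_sumr -big_split; apply: eq_bigr => p _ /=.
have := @d_bilF F C d e chi HH (fun v w => phi (tau chi p.2 v) * psi (tau chi p.1 w)).
move=> /(_ _ _ a x y) -> //.
- by move=> w a' v v'; rewrite (lin_on_tauU HH _ Hp) mulrDl mulrA.
- by move=> v a' w w'; rewrite (lin_on_tauU HH _ Hq) mulrDr mulrCA.
Qed.

Lemma sumtau phi y a b : lin_on P phi ->
  \sum_(m <- d y) phi (tau chi m.1 (chi m.2 a b)) = e y * phi (tau chi a b).
Proof.
move=> Hp; have := lin_on_tsum [seq (1, m.1, chi m.2 a b) | m <- d y] Hp.
rewrite big_map /=; under [X in _ = X]eq_bigr do rewrite mul1r; move=> <-.
rewrite -(lin_on_scale _ Hp (inTn_tau chi a b)); case: Hp => H1 _; apply: H1.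
  exact: inTn_tsum.
move=> c; rewrite /tsumT big_map /fscale /tau.
under eq_bigr do rewrite scale1r -(chi_assoc HH).
rewrite /= -(lmap_sum _ _ (chi1 HH a b)) (unitR HH) (lmapZ _ _ (chi1 HH a b)) //.
Qed.

Variable z : C.
Hypothesis ez : e z = 1.

Definition dT0 (x : C -> C) := flatten [seq can p.1 (x p.2) | p <- d z].
Definition eT0 (x : C -> C) := e (x z).

Lemma Pd_dT0 x phi psi : Pd (dT0 x) phi psi = \sum_(p <- d z) Pd (can p.1 (x p.2)) phi psi.
Proof. by rewrite /Pd /dT0 big_flatten big_map. Qed.

Lemma dT0_P x : Defs.allP (fun p => P p.1 /\ P p.2) (dT0 x).
Proof.
apply: allP_flatten => l Hl; have [p [_ ->]] := In_map_inv Hl.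
exact: can_P.
Qed.

Lemma spec0 : Tn_coalg_spec d e chi dT0 eT0.
Proof.
split.
- by move=> x _; apply: dT0_P.
- move=> x y _ Hxy phi psi _ _; rewrite /dT0.
  by congr (\sum_(p <- flatten _) _); apply: eq_map => p; rewrite Hxy.
- move=> a x y Px Py phi psi Hp Hq; rewrite -/(Pd _ phi psi) Pd_dT0 big_cat big_map /=.
  have -> : \sum_(p <- dT0 x) phi (fscale a p.1) * psi p.2 = a * Pd (dT0 x) phi psi.
    rewrite /Pd mulr_sumr; apply: (@big_allP _ F _ _ _ _ (dT0_P x)) => r [Pr1 _].
    by rewrite (lin_on_scale _ Hp Pr1) mulrA.
  rewrite -/(Pd (dT0 y) phi psi) !Pd_dT0 mulr_sumr -big_split.
  by apply: eq_bigr => p _; rewrite /fcomb (Pd_can_lin p.1 Hp Hq).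
- split; first by move=> x y _ Hxy; rewrite /eT0 Hxy.
  by move=> a x y _ _; rewrite /eT0 /fcomb (e_lin HH).
split; last by move=> a b; rewrite /eT0 /tau (chi_e HH) ez mul1r.
move=> a b phi psi Hp Hq; rewrite -!/(Pd _ phi psi) Pd_dT0 Pd_can.
transitivity (\sum_(r <- d z) \sum_(p <- d r.1) \sum_(w <- d r.2)
   \sum_(al <- d a) \sum_(be <- d b)
   phi (tau chi p.2 (chi w.1 al.2 be.1)) * psi (tau chi p.1 (chi w.2 al.1 be.2))).
  apply: eq_bigr => r _; rewrite Pd_can; apply: eq_bigr => p _.
  rewrite (@tens2 F C C _ _ (fun v w => phi (tau chi p.2 v) * psi (tau chi p.1 w)) (chi_d HH r.2 a b)) /=.
  - rewrite big_allpairs_dep; apply: eq_bigr => w _.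
    by rewrite big_allpairs_dep.
  - by move=> v a' u u'; rewrite (lin_on_tauU HH _ Hp) mulrDl mulrA.
  - by move=> u a' v v'; rewrite (lin_on_tauU HH _ Hq) mulrDr mulrCA.
transitivity (\sum_(r <- d z) \sum_(p <- d r.1) \sum_(al <- d a) \sum_(be <- d b)
   \sum_(w <- d r.2)
   phi (tau chi p.2 (chi w.1 al.2 be.1)) * psi (tau chi p.1 (chi w.2 al.1 be.2))).
  apply: eq_bigr => r _; apply: eq_bigr => p _; rewrite exchange_big.
  by apply: eq_bigr => al _; rewrite exchange_big.
rewrite swap4; apply: eq_bigr => al _; apply: eq_bigr => be _.
rewrite (@four F C d e chi HH (fun u v => phi (tau chi u (chi v al.2 be.1)))
                              (fun u v => psi (tau chi u (chi v al.1 be.2)))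
                              (phi (tau chi al.2 be.1))).
- by rewrite (sumtau _ _ _ Hq) ez mul1r.
- by move=> v; apply: (lin_on_tauD HH _ Hp).
- by move=> u; apply: (lfun_comp (lin_on_tauU HH u Hp) (chi1 HH _ _)).
- by move=> v; apply: (lin_on_tauD HH _ Hq).
- by move=> u; apply: (lfun_comp (lin_on_tauU HH u Hq) (chi1 HH _ _)).
- by move=> y; apply: sumtau.
Qed.
End Exist1.

Section Bialg.
Variable F : fieldType.
Variables (C : lmodType F) (d : C -> seq (C * C)) (e : C -> F) (chi : C -> C -> C -> C).
Hypothesis HH : hopf_heap d e chi.
Notation P := (inTn chi).
Notation can := (canT d chi).
Notation tsum := (tsumT chi).
Variables (dT : (C -> C) -> seq ((C -> C) * (C -> C))) (eT : (C -> C) -> F).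
Hypothesis Hs : Tn_coalg_spec d e chi dT eT.

Lemma Tmul_tsum2 s s' : feq (Tmul (tsum s) (tsum s'))
  (tsum [seq (t.1.1 * t'.1.1, t.1.2, chi t.2 t'.1.2 t'.2) | t <- s, t' <- s']).
Proof.
move=> c; rewrite /Tmul /tsumT big_allpairs_dep /=.
under eq_bigr do rewrite /tau (lmap_sum _ _ (chi1 HH _ _)) scaler_sumr.
rewrite exchange_big; apply: eq_bigr => t _; apply: eq_bigr => t' _ /=.
by rewrite (lmapZ _ _ (chi1 HH _ _)) (chi_assoc HH) scalerA mulrC.
Qed.

Lemma spec_lin phi psi : lin_on P phi -> lin_on P psi ->
  lin_on P (fun f => Pd (dT f) phi psi).
Proof.
move=> Hp Hq; case: (Hs) => H1 H2 H3 _ _; split.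
  by move=> x y Px Hxy; apply: H2.
move=> a x y Px Py; rewrite /Pd (H3 a x y Px Py phi psi Hp Hq) big_cat big_map /=.
congr (_ + _); rewrite mulr_sumr; apply: (@big_allP _ F _ _ _ _ (H1 x Px)) => p [Pp1 Pp2].
by rewrite (lin_on_scale _ Hp Pp1) mulrA.
Qed.

Lemma spec_tau a b phi psi : lin_on P phi -> lin_on P psi ->
  Pd (dT (tau chi a b)) phi psi = Pd (can a b) phi psi.
Proof. by move=> Hp Hq; case: Hs => _ _ _ _ [H _]; apply: H. Qed.

Lemma spec_rep x phi psi : P x -> lin_on P phi -> lin_on P psi ->
  exists s, feq x (tsum s) /\
    Pd (dT x) phi psi = \sum_(t <- s) t.1.1 * Pd (can t.1.2 t.2) phi psi.
Proof.
move=> [s Hx] Hp Hq; exists s; split => //.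
rewrite -(dT_tsum Hs) //; apply: (dT_feq Hs) => //; exact: (inTn_feq (inTn_tsum chi s)).
Qed.

Lemma coassocT x phi psi xi : P x -> lin_on P phi -> lin_on P psi -> lin_on P xi ->
  \sum_(p <- dT x) (\sum_(q <- dT p.1) phi q.1 * psi q.2) * xi p.2 =
  \sum_(p <- dT x) phi p.1 * (\sum_(q <- dT p.2) psi q.1 * xi q.2).
Proof.
move=> Px Hp Hq Hr.
have L1 := spec_lin Hp Hq; have L2 := spec_lin Hq Hr.
have [s Hx] := Px.
rewrite -/(Pd _ (fun f => Pd (dT f) phi psi) xi) -/(Pd _ phi (fun f => Pd (dT f) psi xi)).
rewrite (dT_feq Hs L1 Hr Px (y := tsum s) Hx) (dT_feq Hs Hp L2 Px (y := tsum s) Hx).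
rewrite !(dT_tsum Hs) //.
apply: eq_bigr => t _; congr (_ * _).
rewrite !Pd_can.
under eq_bigr do under eq_bigr do rewrite spec_tau // Pd_can big_distrl /=.
under [RHS]eq_bigr do under eq_bigr do rewrite spec_tau // Pd_can big_distrr /=.
set G := fun (x1 x2 x3 y1 y2 y3 : C) =>
  phi (tau chi x3 y1) * psi (tau chi x2 y2) * xi (tau chi x1 y3).
transitivity (\sum_(p <- d t.1.2) \sum_(p' <- d p.2) \sum_(q <- d t.2) \sum_(q' <- d q.1)
    G p.1 p'.1 p'.2 q'.1 q'.2 q.2).
  apply: eq_bigr => p _; rewrite exchange_big; apply: eq_bigr => q _.
  apply: eq_bigr => p' _; rewrite big_distrl /=; apply: eq_bigr => q' _.
  by rewrite /G.
rewrite -(@coassocF F C d e chi HH t.1.2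
  (fun x1 x2 x3 => \sum_(q <- d t.2) \sum_(q' <- d q.1) G x1 x2 x3 q'.1 q'.2 q.2)).
- apply: eq_bigr => p _; rewrite [RHS]exchange_big; apply: eq_bigr => p' _.
  rewrite (@coassocF F C d e chi HH t.2 (fun y1 y2 y3 => G p'.1 p'.2 p.2 y1 y2 y3)).
  + apply: eq_bigr => q _; rewrite big_distrr /=.
    by apply: eq_bigr => q' _; rewrite /G mulrA.
  + move=> y w a u v; rewrite /G (lin_on_tauU HH _ Hp); ring.
  + move=> u w a y y'; rewrite /G (lin_on_tauU HH _ Hq); ring.
  + move=> u y a w w'; rewrite /G (lin_on_tauU HH _ Hr); ring.
- move=> y w a u v /=; rewrite !mulr_sumr -big_split; apply: eq_bigr => q _.
  rewrite !mulr_sumr -big_split; apply: eq_bigr => q' _.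
  rewrite /G (lin_on_tauD HH _ Hr) /=; ring.
- move=> u w a y y' /=; rewrite !mulr_sumr -big_split; apply: eq_bigr => q _.
  rewrite !mulr_sumr -big_split; apply: eq_bigr => q' _.
  rewrite /G (lin_on_tauD HH _ Hq) /=; ring.
- move=> u y a w w' /=; rewrite !mulr_sumr -big_split; apply: eq_bigr => q _.
  rewrite !mulr_sumr -big_split; apply: eq_bigr => q' _.
  rewrite /G (lin_on_tauD HH _ Hp) /=; ring.
Qed.

Lemma spec_e a b : eT (tau chi a b) = e a * e b.
Proof. by case: Hs => _ _ _ _ [_ H]. Qed.

Lemma lin_eT : lin_on P eT.
Proof. by case: Hs. Qed.

Lemma counitT x : P x ->
  feq (fun c => \sum_(p <- dT x) eT p.1 *: p.2 c) x /\
  feq (fun c => \sum_(p <- dT x) eT p.2 *: p.1 c) x.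
Proof.
move=> Px; have [s Hx] := Px; split=> c; apply: sep_eq => al Hal.
- rewrite (lfun_sum _ _ Hal).
  under eq_bigr do rewrite (lfunZ _ _ Hal).
  rewrite -/(Pd _ eT (fun f => al (f c))).
  rewrite (dT_feq Hs lin_eT (lin_on_ev _ c Hal) Px (y := tsum s) Hx).
  rewrite (dT_tsum Hs _ lin_eT (lin_on_ev _ c Hal)).
  rewrite Hx /tsumT (lfun_sum _ _ Hal); apply: eq_bigr => t _.
  rewrite (lfunZ _ _ Hal) Pd_can; congr (_ * _).
  rewrite /tau -{2}(counitR HH t.1.2) (lmap_sum _ _ (chi2 HH c t.2)).
  rewrite (lfun_sum _ _ Hal); apply: eq_bigr => p _.
  rewrite (lmapZ _ _ (chi2 HH c t.2)) (lfunZ _ _ Hal).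
  rewrite -{2}(counitL HH t.2) (lmap_sum _ _ (chi3 HH c p.1)).
  rewrite (lfun_sum _ _ Hal) mulr_sumr; apply: eq_bigr => q _.
  by rewrite spec_e (lmapZ _ _ (chi3 HH c p.1)) (lfunZ _ _ Hal) mulrA.
- rewrite (lfun_sum _ _ Hal).
  under eq_bigr do rewrite (lfunZ _ _ Hal) mulrC.
  rewrite -/(Pd _ (fun f => al (f c)) eT).
  rewrite (dT_feq Hs (lin_on_ev _ c Hal) lin_eT Px (y := tsum s) Hx).
  rewrite (dT_tsum Hs _ (lin_on_ev _ c Hal) lin_eT).
  rewrite Hx /tsumT (lfun_sum _ _ Hal); apply: eq_bigr => t _.
  rewrite (lfunZ _ _ Hal) Pd_can; congr (_ * _).
  rewrite /tau -{2}(counitL HH t.1.2) (lmap_sum _ _ (chi2 HH c t.2)).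
  rewrite (lfun_sum _ _ Hal); apply: eq_bigr => p _.
  rewrite (lmapZ _ _ (chi2 HH c t.2)) (lfunZ _ _ Hal).
  rewrite -{2}(counitR HH t.2) (lmap_sum _ _ (chi3 HH c p.2)).
  rewrite (lfun_sum _ _ Hal) mulr_sumr; apply: eq_bigr => q _.
  rewrite spec_e (lmapZ _ _ (chi3 HH c p.2)) (lfunZ _ _ Hal); ring.
Qed.

Lemma Tmul_tau u v x y : feq (Tmul (tau chi u v) (tau chi x y)) (tau chi u (chi v x y)).
Proof. by move=> c; rewrite /Tmul /tau (chi_assoc HH). Qed.

Lemma lin_feq phi x y : lin_on P phi -> P x -> feq x y -> phi x = phi y.
Proof. by move=> [H _]; apply: H. Qed.

Lemma KM a b c0 d0 phi psi : lin_on P phi -> lin_on P psi ->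
  \sum_(p <- can a b) \sum_(q <- can c0 d0) phi (Tmul p.1 q.1) * psi (Tmul p.2 q.2) =
  Pd (can a (chi b c0 d0)) phi psi.
Proof.
move=> Hp Hq; rewrite Pd_can /canT big_allpairs_dep; apply: eq_bigr => p _.
rewrite (@tens2 F C C _ _ (fun v w => phi (tau chi p.2 v) * psi (tau chi p.1 w)) (chi_d HH b c0 d0)) /=.
- rewrite big_allpairs_dep; apply: eq_bigr => w _; rewrite big_allpairs_dep big_allpairs_dep.
  apply: eq_bigr => g _; apply: eq_bigr => h _ /=.
  by rewrite (lin_feq Hp _ (Tmul_tau _ _ _ _)) ?(lin_feq Hq _ (Tmul_tau _ _ _ _)) //;
    apply: (inTn_Tmul HH); apply: inTn_tau.
- by move=> v a' u u'; rewrite (lin_on_tauU HH _ Hp) mulrDl mulrA.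
- by move=> u a' v v'; rewrite (lin_on_tauU HH _ Hq) mulrDr mulrCA.
Qed.

Lemma multT x y : P x -> P y ->
  teqT P (dT (Tmul x y)) [seq (Tmul p.1 q.1, Tmul p.2 q.2) | p <- dT x, q <- dT y].
Proof.
move=> Px Py phi psi Hp Hq; have [s Hx] := Px; have [s' Hy] := Py.
rewrite -/(Pd _ phi psi).
rewrite (dT_feq Hs Hp Hq (inTn_Tmul HH Px Py)
   (y := tsum [seq (t.1.1 * t'.1.1, t.1.2, chi t.2 t'.1.2 t'.2) | t <- s, t' <- s'])); last first.
  by move=> c; rewrite -(Tmul_tsum2 s s' c) /Tmul Hx Hy.
rewrite (dT_tsum Hs) // big_allpairs_dep big_allpairs_dep /=.
transitivity (\sum_(p <- dT x) \sum_(t' <- s') t'.1.1 *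
   Pd (can t'.1.2 t'.2) (fun f => phi (Tmul p.1 f)) (fun f => psi (Tmul p.2 f))); last first.
  apply/esym; apply: (@big_allP _ F _ _ _ _ (dT_P Hs Px)) => p [Pp1 Pp2].
  have L1 := lin_on_TmulR HH Hp Pp1; have L2 := lin_on_TmulR HH Hq Pp2.
  by rewrite -(dT_tsum Hs _ L1 L2) -(dT_feq Hs L1 L2 Py Hy).
apply/esym.
transitivity (\sum_(t' <- s') t'.1.1 * \sum_(q <- can t'.1.2 t'.2)
   Pd (dT x) (fun f => phi (Tmul f q.1)) (fun f => psi (Tmul f q.2))).
  rewrite exchange_big; apply: eq_bigr => t' _; rewrite -mulr_sumr; congr (_ * _).
  by rewrite /Pd exchange_big.
transitivity (\sum_(t' <- s') t'.1.1 * \sum_(q <- can t'.1.2 t'.2)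
   \sum_(t <- s) t.1.1 * Pd (can t.1.2 t.2) (fun f => phi (Tmul f q.1)) (fun f => psi (Tmul f q.2))).
  apply: eq_bigr => t' _; congr (_ * _).
  apply: (@big_allP _ F _ _ _ _ (can_P d chi t'.1.2 t'.2)) => q [Pq1 Pq2].
  have L1 := lin_on_TmulL HH Hp Pq1; have L2 := lin_on_TmulL HH Hq Pq2.
  by rewrite -(dT_tsum Hs _ L1 L2) -(dT_feq Hs L1 L2 Px Hx).
rewrite [RHS]exchange_big; apply: eq_bigr => t' _.
rewrite exchange_big mulr_sumr; apply: eq_bigr => t _.
rewrite -KM // /Pd mulr_sumr mulr_sumr.
under eq_bigr do rewrite mulr_sumr mulr_sumr. under [RHS]eq_bigr do rewrite mulr_sumr. rewrite [RHS]exchange_big; apply: eq_bigr => q _; apply: eq_bigr => p _; ring.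
Qed.

Lemma sumtau1 phi y : lin_on P phi ->
  \sum_(m <- d y) phi (tau chi m.1 m.2) = e y * phi (@Tone C).
Proof.
move=> Hp; have := lin_on_tsum [seq (1, m.1, m.2) | m <- d y] Hp.
rewrite big_map /=; under [X in _ = X]eq_bigr do rewrite mul1r; move=> <-.
rewrite -(lin_on_scale _ Hp (inTn_one HH)); apply: (lin_feq Hp); first exact: inTn_tsum.
move=> c; rewrite /tsumT big_map /fscale /tau /Tone /=.
by under eq_bigr do rewrite scale1r; rewrite (unitR HH).
Qed.

Lemma oneT : teqT P (dT (@Tone C)) [:: (@Tone C, @Tone C)].
Proof.
move=> phi psi Hp Hq; have [z ez] := exists_z HH.
rewrite big_cons big_nil addr0 -/(Pd _ phi psi).
rewrite (dT_feq Hs Hp Hq (inTn_one HH) (Tone_tsum HH ez)) (dT_tsum Hs _ Hp Hq) big_map /=.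
under eq_bigr do rewrite mul1r Pd_can.
rewrite (@four F C d e chi HH (fun u v => phi (tau chi u v)) (fun u v => psi (tau chi u v))
                              (phi (@Tone C))).
- by rewrite (sumtau1 _ Hq) ez mul1r.
- by move=> v; apply: (lin_on_tauD HH _ Hp).
- by move=> u; apply: (lin_on_tauU HH u Hp).
- by move=> v; apply: (lin_on_tauD HH _ Hq).
- by move=> u; apply: (lin_on_tauU HH u Hq).
- by move=> y; apply: sumtau1.
Qed.

Lemma eT_mul x y : P x -> P y -> eT (Tmul x y) = eT x * eT y.
Proof.
move=> Px Py; have [s Hx] := Px; have [s' Hy] := Py.
rewrite (lin_feq lin_eT (inTn_Tmul HH Px Py)
   (y := tsum [seq (t.1.1 * t'.1.1, t.1.2, chi t.2 t'.1.2 t'.2) | t <- s, t' <- s'])); last first.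
  by move=> c; rewrite -(Tmul_tsum2 s s' c) /Tmul Hx Hy.
rewrite (lin_feq lin_eT Px Hx) (lin_feq lin_eT Py Hy) !(eT_tsum Hs) big_allpairs_dep.
rewrite big_distrlr; apply: eq_bigr => t _; apply: eq_bigr => t' _ /=.
rewrite (chi_e HH); ring.
Qed.

Lemma eT_one : eT (@Tone C) = 1.
Proof.
have [z ez] := exists_z HH.
rewrite (lin_feq lin_eT (inTn_one HH) (Tone_tsum HH ez)) (eT_tsum Hs) big_map /=.
rewrite -ez -{3}(counitL HH z) (lfun_sum _ _ (e_lin HH)); apply: eq_bigr => p _.
by rewrite ez mul1r (lfunZ _ _ (e_lin HH)).
Qed.

Lemma bialgT : bialgebra_on P dT eT.
Proof.
split.
- split; first by move=> a x y; apply: inTn_fcomb.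
  split; first exact: (inTn_one HH).
  by move=> x y; apply: (inTn_Tmul HH).
- split.
    move=> a x x' y Px Px' Py; split=> c //.
    by rewrite /Tmul /fcomb (inTn_lin HH Py).
  by split=> // x Px; split.
- case: Hs => H1 H2 H3 H4 _; split=> //; split=> //.
- split; first by move=> x phi psi xi Px Hp Hq Hr; apply: coassocT.
  by move=> x Px; apply: counitT.
- split; first by move=> x y Px Py; apply: multT.
  split; first exact: oneT.
  split; first by move=> x y; apply: eT_mul.
  exact: eT_one.
Qed.
End Bialg.

Section Antipode.
Variable F : fieldType.
Variables (C : lmodType F) (d : C -> seq (C * C)) (e : C -> F) (chi : C -> C -> C -> C).
Hypothesis HH : hopf_heap d e chi.
Variable th : C -> C.
Hypothesis Hg : grunspan d e chi th.
Notation P := (inTn chi).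
Notation can := (canT d chi).
Notation tsum := (tsumT chi).

Lemma grun a b c x y : chi (chi a b (th c)) x y = chi a (chi x c b) y.
Proof. by case: Hg. Qed.

Variable z : C.
Hypothesis ez : e z = 1.

Definition S0 (x : C -> C) : C -> C := fun c => \sum_(p <- d z) chi c (x p.1) p.2.

Lemma S0_spec : Tn_antipode_spec chi th S0.
Proof.
split.
- move=> x _; exists [seq (1, x p.1, p.2) | p <- d z] => c.
  by rewrite /S0 big_map; apply: eq_bigr => p _; rewrite scale1r.
- by move=> x y _ Hxy c; rewrite /S0; apply: eq_bigr => p _; rewrite Hxy.
- move=> a x y _ _ c; rewrite /S0 /fcomb scaler_sumr -big_split; apply: eq_bigr => p _ /=.
  by rewrite (chi2 HH).
- move=> a b c; rewrite /S0 /tau.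
  under eq_bigr do rewrite -grun.
  by rewrite (unitR HH) ez scale1r.
Qed.

Lemma th_form c : th c = \sum_(q <- d z) \sum_(p <- d z) chi q.1 (chi p.1 c q.2) p.2.
Proof.
rewrite -[th c]scale1r -ez -(unitL HH); apply: eq_bigr => q _.
under eq_bigr do rewrite -grun.
by rewrite (unitR HH) ez scale1r.
Qed.

Section Any.
Variables (dT : (C -> C) -> seq ((C -> C) * (C -> C))) (eT : (C -> C) -> F).
Hypothesis Hs : Tn_coalg_spec d e chi dT eT.
Variable S : (C -> C) -> (C -> C).
Hypothesis HS : Tn_antipode_spec chi th S.

Lemma S_tsum s c : S (tsum s) c = \sum_(t <- s) t.1.1 *: chi c t.2 (th t.1.2).
Proof.
case: HS => H1 H2 H3 H4.
rewrite (@Qtsum F C chi C (fun f => S f c)).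
- by apply: eq_bigr => t _; rewrite H4.
- by move=> x y Px Hxy; apply: H2.
- by move=> a x y Px Py; rewrite H3.
Qed.

Lemma S_form f c : P f -> S f c = \sum_(r <- d z) chi c (f r.1) r.2.
Proof.
move=> Pf; have [s Hf] := Pf; case: (HS) => _ H2 _ _.
rewrite (H2 _ (tsum s) Pf Hf c) S_tsum.
transitivity (\sum_(r <- d z) chi c (tsum s r.1) r.2); last first.
  by apply: eq_bigr => r _; rewrite Hf.
rewrite /tsumT.
under [RHS]eq_bigr do rewrite (lmap_sum _ _ (chi2 HH c _)).
rewrite exchange_big; apply: eq_bigr => t _.
under [RHS]eq_bigr do rewrite (lmapZ _ _ (chi2 HH c _)) /tau -grun.
by rewrite -scaler_sumr (unitR HH) ez scale1r.
Qed.

Lemma SB f g c : P f -> P g ->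
  g (S f c) = \sum_(r <- d z) chi c (f r.1) (g r.2).
Proof.
move=> Pf Pg; rewrite S_form // (lmap_sum _ _ (inTn_lin HH Pg)).
by apply: eq_bigr => r _; rewrite (inTn_chi HH).
Qed.

Lemma sum_th a c : \sum_(p <- d a) chi c p.2 (th p.1) = e a *: c.
Proof.
transitivity (\sum_(p <- d a) \sum_(r <- d z) chi c (chi r.1 p.1 p.2) r.2).
  apply: eq_bigr => p _; under eq_bigr do rewrite -grun.
  by rewrite (unitR HH) ez scale1r.
rewrite exchange_big /=.
under eq_bigr do rewrite -(lmap_sum _ _ (chi2 HH c _)) (unitR HH) (lmapZ _ _ (chi2 HH c _)).
by rewrite -scaler_sumr (unitR HH) ez scale1r.
Qed.

Lemma antipodeT : antipode_on P dT eT S.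
Proof.
case: (HS) => H1 H2 H3 H4; split => // x Px; have [s Hx] := Px.
split=> c; apply: sep_eq => al Hal.
- rewrite /Tmul (lfun_sum _ _ Hal) (lfunZ _ _ Hal).
  transitivity (\sum_(r <- d z) \sum_(p <- dT x) al (chi c (p.1 r.1) (p.2 r.2))).
    rewrite exchange_big; apply: (@big_allP _ F _ _ _ _ (dT_P Hs Px)) => p [Pp1 Pp2].
    by rewrite SB // (lfun_sum _ _ Hal).
  transitivity (\sum_(r <- d z) \sum_(t <- s) t.1.1 *
     \sum_(q <- can t.1.2 t.2) al (chi c (q.1 r.1) (q.2 r.2))).
    apply: eq_bigr => r _.
    rewrite (TnT Hs r.1 (beta := fun y g => al (chi c y (g r.2))) Px Hx) //.
    + move=> y; split; first by move=> f g _ ->.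
      by move=> a f g _ _; rewrite /fcomb (chi3 HH) Hal.
    + by move=> g; apply: lfun_comp => //; apply: (chi2 HH).
  rewrite exchange_big (lin_feq (lin_eT Hs) Px Hx) (eT_tsum Hs) mulr_suml.
  apply: eq_bigr => t _; rewrite -mulr_sumr -mulrA; congr (_ * _); rewrite exchange_big.
  transitivity (\sum_(q <- can t.1.2 t.2) al (q.2 (S q.1 c))).
    apply: (@big_allP _ F _ _ _ _ (can_P d chi t.1.2 t.2)) => q [Pq1 Pq2].
    by rewrite SB // (lfun_sum _ _ Hal).
  rewrite /canT big_allpairs_dep.
  transitivity (al (\sum_(p <- d t.1.2) \sum_(w <- d t.2) chi c (chi p.1 p.2 w.1) w.2)).
    rewrite (lfun_sum _ _ Hal); apply: eq_bigr => p _; rewrite (lfun_sum _ _ Hal).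
    by apply: eq_bigr => w _ /=; rewrite H4 /tau grun.
  rewrite exchange_big /=.
  under eq_bigr do rewrite -(lmap_sum _ _ (chi2 HH c _)) (unitL HH) (lmapZ _ _ (chi2 HH c _)).
  by rewrite -scaler_sumr (unitR HH) scalerA (lfunZ _ _ Hal) mulrC.
- rewrite /Tmul (lfun_sum _ _ Hal) (lfunZ _ _ Hal).
  transitivity (\sum_(p <- dT x) al (\sum_(r <- d z) chi (p.1 c) (p.2 r.1) r.2)).
    apply: (@big_allP _ F _ _ _ _ (dT_P Hs Px)) => p [Pp1 Pp2].
    by rewrite S_form.
  rewrite (TnT Hs c (beta := fun y g => al (\sum_(r <- d z) chi y (g r.1) r.2)) Px Hx).
  + rewrite (lin_feq (lin_eT Hs) Px Hx) (eT_tsum Hs) mulr_suml; apply: eq_bigr => t _.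
    rewrite -mulrA; congr (_ * _).
    transitivity (\sum_(q <- can t.1.2 t.2) al (S q.2 (q.1 c))).
      apply: (@big_allP _ F _ _ _ _ (can_P d chi t.1.2 t.2)) => q [Pq1 Pq2].
      by rewrite S_form.
    rewrite /canT big_allpairs_dep.
    transitivity (al (\sum_(p <- d t.1.2) \sum_(w <- d t.2) chi c p.2 (chi w.1 w.2 (th p.1)))).
      rewrite (lfun_sum _ _ Hal); apply: eq_bigr => p _; rewrite (lfun_sum _ _ Hal).
      by apply: eq_bigr => w _ /=; rewrite H4 /tau (chi_assoc HH).
    under eq_bigr do rewrite -(lmap_sum _ _ (chi3 HH c _)) (unitL HH) (lmapZ _ _ (chi3 HH c _)).
    by rewrite -scaler_sumr sum_th scalerA (lfunZ _ _ Hal); ring.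
  + move=> y; split; first by move=> f g _ Hfg; congr (al _); apply: eq_bigr => r _; rewrite Hfg.
    move=> a f g _ _; rewrite /fcomb -(lfunZ _ _ Hal) -(lfunD _ _ Hal); congr (al _).
    rewrite scaler_sumr -big_split; apply: eq_bigr => r _ /=.
    by rewrite (chi2 HH).
  + move=> g; apply: lfun_comp => // a u v; rewrite scaler_sumr -big_split.
    by apply: eq_bigr => r _; rewrite (chi1 HH).
Qed.
End Any.
End Antipode.

Section Tmap.
Variable F : fieldType.
Variables (C D : lmodType F) (chiC : C -> C -> C -> C) (chiD : D -> D -> D -> D).
Variables (f : C -> D) (T : (C -> C) -> (D -> D)).
Hypothesis HT : Tn_map_spec chiC chiD f T.

Lemma Tmap_tsum s : feq (T (tsumT chiC s)) (tsumT chiD [seq (t.1.1, f t.1.2, f t.2) | t <- s]).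
Proof.
move=> u; case: HT => H1 H2 H3 H4.
rewrite (@Qtsum F C chiC D (fun g => T g u)).
- by rewrite /tsumT big_map; apply: eq_bigr => t _; rewrite H4.
- by move=> x y Px Hxy; apply: H2.
- by move=> a x y Px Py; rewrite H3.
Qed.

Lemma Tmap_rep x s : inTn chiC x -> feq x (tsumT chiC s) ->
  feq (T x) (tsumT chiD [seq (t.1.1, f t.1.2, f t.2) | t <- s]).
Proof.
move=> Px Hx u; case: (HT) => _ H2 _ _; by rewrite (H2 _ _ Px Hx u) Tmap_tsum.
Qed.

Lemma Tmap_P x : inTn chiC x -> inTn chiD (T x).
Proof. by move=> Px; case: HT => H1 _ _ _; apply: H1. Qed.

Lemma Tmap_lin_on phi : lin_on (inTn chiD) phi -> lin_on (inTn chiC) (fun g => phi (T g)).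
Proof.
move=> [K1 K2]; case: HT => H1 H2 H3 H4; split.
  by move=> x y Px Hxy; apply: K1; [apply: H1 | apply: H2].
move=> a x y Px Py; rewrite -K2; try by apply: H1.
by apply: K1; [apply: H1; apply: inTn_fcomb | apply: H3].
Qed.
End Tmap.

Section Morph.
Variable F : fieldType.
Variables (C D : lmodType F) (dC : C -> seq (C * C)) (eC : C -> F) (chiC : C -> C -> C -> C).
Variables (dD : D -> seq (D * D)) (eD : D -> F) (chiD : D -> D -> D -> D).
Hypothesis HC : hopf_heap dC eC chiC.
Hypothesis HD : hopf_heap dD eD chiD.
Variable f : C -> D.
Hypothesis Hf : hh_morph dC eC chiC dD eD chiD f.

Lemma f_lin : lmap f. Proof. by case: Hf => [[]]. Qed.
Lemma f_d c : teq2 (dD (f c)) [seq (f p.1, f p.2) | p <- dC c].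
Proof. by case: Hf => [[_ H _]] _. Qed.
Lemma f_e c : eD (f c) = eC c.
Proof. by case: Hf => [[_ _ H]] _. Qed.
Lemma f_chi a b c : f (chiC a b c) = chiD (f a) (f b) (f c).
Proof. by case: Hf. Qed.

Lemma f_dsum (U : lmodType F) c (B : D -> D -> U) :
  (forall y, lmap (fun x => B x y)) -> (forall x, lmap (B x)) ->
  \sum_(p <- dD (f c)) B p.1 p.2 = \sum_(p <- dC c) B (f p.1) (f p.2).
Proof. by move=> H1 H2; rewrite (tens2V (f_d c) H1 H2) big_map. Qed.

Lemma f_dsumF c (B : D -> D -> F) :
  (forall y, lfun (fun x => B x y)) -> (forall x, lfun (B x)) ->
  \sum_(p <- dD (f c)) B p.1 p.2 = \sum_(p <- dC c) B (f p.1) (f p.2).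
Proof. by move=> H1 H2; rewrite (tens2 (f_d c) H1 H2) big_map. Qed.

Variable z : C.
Hypothesis ez : eC z = 1.

Lemma f_unit u : \sum_(p <- dC z) chiD u (f p.1) (f p.2) = u.
Proof.
rewrite -(@f_dsum D z (chiD u)); first by rewrite (unitR HD) f_e ez scale1r.
- by move=> y; apply: (chi2 HD).
- by move=> x; apply: (chi3 HD).
Qed.

Definition T0 (x : C -> C) : D -> D := fun u => \sum_(p <- dC z) chiD u (f p.1) (f (x p.2)).

Lemma T0_spec : Tn_map_spec chiC chiD f T0.
Proof.
split.
- move=> x _; exists [seq (1, f p.1, f (x p.2)) | p <- dC z] => u.
  by rewrite /T0 big_map; apply: eq_bigr => p _; rewrite scale1r.
- by move=> x y _ Hxy u; rewrite /T0; apply: eq_bigr => p _; rewrite Hxy.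
- move=> a x y _ _ u; rewrite /T0 /fcomb scaler_sumr -big_split; apply: eq_bigr => p _ /=.
  by rewrite f_lin (chi3 HD).
- move=> a b u; rewrite /T0 /tau.
  under eq_bigr do rewrite f_chi -(chi_assoc HD).
  by rewrite -(lmap_sum _ _ (chi1 HD _ _)) f_unit.
Qed.

Section AnyT.
Variable T : (C -> C) -> (D -> D).
Hypothesis HT : Tn_map_spec chiC chiD f T.

Lemma Tmul_map x y : inTn chiC x -> inTn chiC y -> feq (T (Tmul x y)) (Tmul (T x) (T y)).
Proof.
move=> Px Py u; have [s Hx] := Px; have [s' Hy] := Py.
have E : feq (Tmul x y) (tsumT chiC [seq (t.1.1 * t'.1.1, t.1.2, chiC t.2 t'.1.2 t'.2) | t <- s, t' <- s']).
  by move=> c; rewrite -(Tmul_tsum2 HC s s' c) /Tmul Hx Hy.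
rewrite (Tmap_rep HT (inTn_Tmul HC Px Py) E) /Tmul (Tmap_rep HT Px Hx) (Tmap_rep HT Py Hy).
rewrite -/(Tmul (tsumT chiD _) (tsumT chiD _) u) (Tmul_tsum2 HD).
rewrite /tsumT big_map !big_allpairs_dep big_map; apply: eq_bigr => t _.
rewrite big_map; apply: eq_bigr => t' _ /=.
by rewrite f_chi.
Qed.

Lemma Tone_map : feq (T (@Tone C)) (@Tone D).
Proof.
move=> u; rewrite (Tmap_rep HT (inTn_one HC) (Tone_tsum HC ez)) /tsumT /Tone !big_map /=.
by under eq_bigr do rewrite scale1r; rewrite /tau f_unit.
Qed.

Section Bi.
Variables (dTC : (C -> C) -> seq ((C -> C) * (C -> C))) (eTC : (C -> C) -> F).
Variables (dTD : (D -> D) -> seq ((D -> D) * (D -> D))) (eTD : (D -> D) -> F).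
Hypothesis HsC : Tn_coalg_spec dC eC chiC dTC eTC.
Hypothesis HsD : Tn_coalg_spec dD eD chiD dTD eTD.

Lemma dT_map x : inTn chiC x ->
  teqT (inTn chiD) (dTD (T x)) [seq (T p.1, T p.2) | p <- dTC x].
Proof.
move=> Px phi psi Hp Hq; have [s Hx] := Px.
have L1 := Tmap_lin_on HT Hp; have L2 := Tmap_lin_on HT Hq.
rewrite -/(Pd _ phi psi) (dT_feq HsD Hp Hq (Tmap_P HT Px) (Tmap_rep HT Px Hx)).
rewrite (dT_tsum HsD _ Hp Hq) big_map.
transitivity (Pd (dTC x) (fun g => phi (T g)) (fun g => psi (T g))); last by rewrite /Pd big_map.
rewrite (dT_feq HsC L1 L2 Px Hx) (dT_tsum HsC _ L1 L2); apply: eq_bigr => t _ /=.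
congr (_ * _); rewrite !Pd_can.
rewrite (@f_dsumF t.1.2 (fun u v => \sum_(q <- dD (f t.2)) phi (tau chiD v q.1) * psi (tau chiD u q.2))).
- apply: eq_bigr => p _.
  rewrite (@f_dsumF t.2 (fun u v => phi (tau chiD (f p.2) u) * psi (tau chiD (f p.1) v))).
  + apply: eq_bigr => q _; case: (HT) => H1 _ _ H4.
    rewrite (lin_feq Hp (H1 _ (inTn_tau _ _ _)) (H4 _ _)) (lin_feq Hq (H1 _ (inTn_tau _ _ _)) (H4 _ _)) //.
  + by move=> y a u v; rewrite (lin_on_tauU HD _ Hp) mulrDl mulrA.
  + by move=> x0 a u v; rewrite (lin_on_tauU HD _ Hq) mulrDr mulrCA.
- move=> y a u v; rewrite mulr_sumr -big_split; apply: eq_bigr => q _ /=.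
  rewrite (lin_on_tauD HD _ Hq) /=; ring.
- move=> y a u v; rewrite mulr_sumr -big_split; apply: eq_bigr => q _ /=.
  rewrite (lin_on_tauD HD _ Hp) /=; ring.
Qed.

Lemma eT_map x : inTn chiC x -> eTD (T x) = eTC x.
Proof.
move=> Px; have [s Hx] := Px.
rewrite (lin_feq (lin_eT HsD) (Tmap_P HT Px) (Tmap_rep HT Px Hx)) (eT_tsum HsD).
rewrite (lin_feq (lin_eT HsC) Px Hx) (eT_tsum HsC) big_map; apply: eq_bigr => t _ /=.
by rewrite !f_e.
Qed.

Lemma bialg_mapT : bialg_map (inTn chiC) (inTn chiD) dTC eTC dTD eTD T.
Proof.
split.
- by move=> x y; apply: Tmul_map.
- exact: Tone_map.
- exact: dT_map.
- exact: eT_map.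
Qed.
End Bi.

Lemma lmap_comp (U V W : lmodType F) (g : U -> V) (h : V -> W) :
  lmap g -> lmap h -> lmap (fun x => h (g x)).
Proof. by move=> Hg Hh a x y; rewrite Hg Hh. Qed.

Lemma lmap_sumf (U V : lmodType F) I (l : seq I) (G : I -> U -> V) :
  (forall i, lmap (G i)) -> lmap (fun x => \sum_(i <- l) G i x).
Proof.
move=> H a x y; rewrite scaler_sumr -big_split; apply: eq_bigr => i _ /=.
by rewrite H.
Qed.

Section Anti.
Variables (thC : C -> C) (thD : D -> D) (SC : (C -> C) -> (C -> C)) (SD : (D -> D) -> (D -> D)).
Hypotheses (HgC : grunspan dC eC chiC thC) (HgD : grunspan dD eD chiD thD).
Hypotheses (HSC : Tn_antipode_spec chiC thC SC) (HSD : Tn_antipode_spec chiD thD SD).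

Lemma f_th c : f (thC c) = thD (f c).
Proof.
have ez' : eD (f z) = 1 by rewrite f_e.
rewrite (th_form HC HgC ez c) (th_form HD HgD ez' (f c)).
rewrite (lmap_sum _ _ f_lin).
rewrite (@f_dsum D z (fun u v => \sum_(p <- dD (f z)) chiD u (chiD p.1 (f c) v) p.2)).
- apply: eq_bigr => q _; rewrite (lmap_sum _ _ f_lin).
  rewrite (@f_dsum D z (fun u v => chiD (f q.1) (chiD u (f c) (f q.2)) v)).
  + by apply: eq_bigr => p _; rewrite !f_chi.
  + move=> y; apply: (lmap_comp (g := fun x => chiD x (f c) (f q.2)) (h := fun w => chiD (f q.1) w y)); [exact: (chi1 HD) | exact: (chi2 HD)].
  + by move=> x; apply: (chi3 HD).
- by move=> y; apply: lmap_sumf => p; apply: (chi1 HD).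
- move=> x; apply: lmap_sumf => p.
  apply: (lmap_comp (g := fun v => chiD p.1 (f c) v) (h := fun w => chiD x w p.2)).
  + exact: (chi3 HD).
  + exact: (chi2 HD).
Qed.

Lemma S_rep (G : lmodType F) (chi : G -> G -> G -> G) th S x s :
  Tn_antipode_spec chi th S -> inTn chi x -> feq x (tsumT chi s) ->
  feq (S x) (tsumT chi [seq (t.1.1, t.2, th t.1.2) | t <- s]).
Proof.
move=> HS Px Hx u; case: (HS) => _ H2 _ _.
by rewrite (H2 _ _ Px Hx u) (S_tsum HS) /tsumT big_map.
Qed.

Lemma S_map x : inTn chiC x -> feq (T (SC x)) (SD (T x)).
Proof.
move=> Px u; have [s Hx] := Px.
have PS : inTn chiC (SC x) by case: HSC => H1 _ _ _; apply: H1.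
rewrite (Tmap_rep HT PS (S_rep HSC Px Hx)).
rewrite (S_rep HSD (Tmap_P HT Px) (Tmap_rep HT Px Hx)).
rewrite /tsumT !big_map; apply: eq_bigr => t _ /=.
by rewrite f_th.
Qed.
End Anti.
End AnyT.
End Morph.


Unset Implicit Arguments.

Theorem mainTheorem3 (F : fieldType) :
  (* (1) Tn^r C is a bialgebra with the given (well-defined) structure *)
  (forall (C : lmodType F) (dC : C -> seq (C * C)) (eC : C -> F) (chi : C -> C -> C -> C),
     hopf_heap dC eC chi ->
     (exists (dT : (C -> C) -> seq ((C -> C) * (C -> C))) (eT : (C -> C) -> F),
        Tn_coalg_spec dC eC chi dT eT) /\
     (forall dT eT, Tn_coalg_spec dC eC chi dT eT -> bialgebra_on (inTn chi) dT eT)) /\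
  (* (2) with a Grunspan map, Tn^r C is a Hopf algebra, S(tau_a^b) = tau_b^{th a} *)
  (forall (C : lmodType F) (dC : C -> seq (C * C)) (eC : C -> F) (chi : C -> C -> C -> C)
          (th : C -> C),
     hopf_heap dC eC chi -> grunspan dC eC chi th ->
     (exists S : (C -> C) -> (C -> C), Tn_antipode_spec chi th S) /\
     (forall dT eT S, Tn_coalg_spec dC eC chi dT eT -> Tn_antipode_spec chi th S ->
        antipode_on (inTn chi) dT eT S)) /\
  (* (3) Tn^r f is a well-defined bialgebra map, Hopf algebra map with Grunspan maps *)
  (forall (C D : lmodType F) (dC : C -> seq (C * C)) (eC : C -> F) (chiC : C -> C -> C -> C)
          (dD : D -> seq (D * D)) (eD : D -> F) (chiD : D -> D -> D -> D) (f : C -> D),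
     hopf_heap dC eC chiC -> hopf_heap dD eD chiD -> hh_morph dC eC chiC dD eD chiD f ->
     (exists T : (C -> C) -> (D -> D), Tn_map_spec chiC chiD f T) /\
     (forall T dTC eTC dTD eTD, Tn_map_spec chiC chiD f T ->
        Tn_coalg_spec dC eC chiC dTC eTC -> Tn_coalg_spec dD eD chiD dTD eTD ->
        bialg_map (inTn chiC) (inTn chiD) dTC eTC dTD eTD T) /\
     (forall T thC thD SC SD, Tn_map_spec chiC chiD f T ->
        grunspan dC eC chiC thC -> grunspan dD eD chiD thD ->
        Tn_antipode_spec chiC thC SC -> Tn_antipode_spec chiD thD SD ->
        forall x, inTn chiC x -> feq (T (SC x)) (SD (T x)))) /\
  (* (4) functoriality: Tn^r id = id, Tn^r (g o f) = Tn^r g o Tn^r f *)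
  (forall (C : lmodType F) (dC : C -> seq (C * C)) (eC : C -> F) (chi : C -> C -> C -> C)
          (T : (C -> C) -> (C -> C)),
     hopf_heap dC eC chi -> Tn_map_spec chi chi id T ->
     forall x, inTn chi x -> feq (T x) x) /\
  (forall (C D E : lmodType F)
          (dC : C -> seq (C * C)) (eC : C -> F) (chiC : C -> C -> C -> C)
          (dD : D -> seq (D * D)) (eD : D -> F) (chiD : D -> D -> D -> D)
          (dE : E -> seq (E * E)) (eE : E -> F) (chiE : E -> E -> E -> E)
          (f : C -> D) (g : D -> E)
          (Tf : (C -> C) -> (D -> D)) (Tg : (D -> D) -> (E -> E)) (Tgf : (C -> C) -> (E -> E)),
     hopf_heap dC eC chiC -> hopf_heap dD eD chiD -> hopf_heap dE eE chiE ->
     hh_morph dC eC chiC dD eD chiD f -> hh_morph dD eD chiD dE eE chiE g ->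
     Tn_map_spec chiC chiD f Tf -> Tn_map_spec chiD chiE g Tg ->
     Tn_map_spec chiC chiE (fun c => g (f c)) Tgf ->
     forall x, inTn chiC x -> feq (Tgf x) (Tg (Tf x))).
Proof.
split.
  move=> C dC eC chi HH; split.
    have [z ez] := exists_z HH.
    by exists (dT0 dC chi z), (eT0 eC z); apply: (spec0 HH ez).
  by move=> dT eT Hs; apply: (bialgT HH Hs).
split.
  move=> C dC eC chi th HH Hg; have [z ez] := exists_z HH; split.
    by exists (S0 dC chi z); apply: (S0_spec HH Hg ez).
  by move=> dT eT S Hs HS; apply: (antipodeT HH Hg ez Hs HS).
split.
  move=> C D dC eC chiC dD eD chiD f HC HD Hf; have [z ez] := exists_z HC; split.
    by exists (T0 dC chiD f z); apply: (T0_spec HD Hf ez).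
  split.
    by move=> T dTC eTC dTD eTD HT HsC HsD; apply: (bialg_mapT HC HD Hf ez HT HsC HsD).
  by move=> T thC thD SC SD HT HgC HgD HSC HSD x Px; apply: (S_map HC HD Hf ez HT HgC HgD HSC HSD Px).
split.
  move=> C dC eC chi T HH HT x Px u; have [s Hx] := Px.
  rewrite (Tmap_rep HT Px Hx) Hx /tsumT big_map.
  by apply: eq_bigr.
move=> C D E dC eC chiC dD eD chiD dE eE chiE f g Tf Tg Tgf _ _ _ _ _ HTf HTg HTgf x Px u.
have [s Hx] := Px.
rewrite (Tmap_rep HTgf Px Hx) (Tmap_rep HTg (Tmap_P HTf Px) (Tmap_rep HTf Px Hx)).
by rewrite /tsumT !big_map.
Qed.
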